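(* Assume either $\mathbb E[W^4]<\infty$ (set $\boldsymbol\delta=3$) or $W$ satisfies the power-law tail condition with $\tau\in(3,5)$ (set $\boldsymbol\delta=\tau-2$). Then there exist $\varepsilon>0$, a constant $c_1>0$ and a function $e_1(\beta,B)\ge 0$ with $\limsup_{B\searrow0}e_1(\beta,B)<\infty$ for each $\beta\in[\beta_c,\beta_c+\varepsilon]$ and $\lim_{B\searrow0}e_1(\beta_c,B)=0$, such that for all $\beta\in[\beta_c,\beta_c+\varepsilon]$ and $B\in(0,\varepsilon)$, with $z^*=z^*(\beta,B)$, \[ z^*\ge\sqrt{\mathbb E[W]\sinh(\beta)}\,B+\sinh(\beta)\,\nu\,z^*-c_1(z^* )^{\boldsymbol\delta}-B\,e_1(\beta,B). \] If $W$ satisfies the power-law tail condition with $\tau=5$, the same holds with $c_1(z^* )^{\boldsymbol\delta}$ replaced by $c_1(z^* )^3\log(1/z^* )$.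
   Context: $W\ge0$ is a random variable with $\mathbb E[W^2]<\infty$, $\mathbb E[W]>0$; $\nu=\mathbb E[W^2]/\mathbb E[W]$, $\beta_c={\rm asinh}(1/\nu)$, $\alpha(\beta)=\sqrt{\sinh(\beta)/\mathbb E[W]}$. For $B>0$, $z^*(\beta,B)$ is the unique positive solution of $z=\mathbb E[\tanh(\alpha(\beta)Wz+B)\alpha(\beta)W]$. Power-law tail condition with exponent $\tau$: constants $C_W>c_W>0$, $w_0>1$ with $c_Ww^{-(\tau-1)}\le\mathbb P(W>w)\le C_Ww^{-(\tau-1)}$ for $w>w_0$. *)

(* Defs.v *)
From Stdlib Require Import Reals.
Open Scope R_scope.

(* The law of the random variable W >= 0 is encoded by its quantile function
   Q : (0,1) -> [0,oo), nondecreasing: W has the law of Q(U), U ~ Uniform(0,1).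
   Every real random variable admits such a representation. *)
Definition is_quantile (Q : R -> R) : Prop :=
  (forall u v, 0 < u -> u <= v -> v < 1 -> Q u <= Q v) /\
  (forall u, 0 < u < 1 -> 0 <= Q u).

Definition partial_integrals (Q : R -> R) (g : R -> R) (x : R) : Prop :=
  exists a b (pr : Riemann_integrable (fun u => g (Q u)) a b),
    0 < a /\ a < b /\ b < 1 /\ RiemannInt pr = x.

(* For g >= 0 on [0,oo):  IsExp Q g m  <->  E[g(W)] is finite and equals m
   (improper integral over (0,1) of g o Q, as the supremum over compact
   subintervals, which by monotone convergence is the expectation). *)
Definition IsExp (Q : R -> R) (g : R -> R) (m : R) : Prop :=
  is_lub (partial_integrals Q g) m.

(* P(W > w) = p : the Lebesgue measure of {u in (0,1) | Q u <= w} (an interval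
   starting at 0, since Q is nondecreasing) is 1 - p. *)
Definition TailProb (Q : R -> R) (w p : R) : Prop :=
  is_lub (fun u => u = 0 \/ (0 < u < 1 /\ Q u <= w)) (1 - p).

Definition PowerTail (Q : R -> R) (tau : R) : Prop :=
  exists CW cW w0, CW > cW /\ cW > 0 /\ w0 > 1 /\
    forall w p, w > w0 -> TailProb Q w p ->
      cW * Rpower w (- (tau - 1)) <= p /\ p <= CW * Rpower w (- (tau - 1)).

Definition alpha (EW beta : R) : R := sqrt (sinh beta / EW).

(* z is a positive solution of z = E[tanh(alpha W z + B) alpha W]
   (i.e. z = zstar(beta,B), the unique positive solution). *)
Definition IsZstar (Q : R -> R) (EW beta B z : R) : Prop :=
  0 < z /\ IsExp Q (fun w => tanh (alpha EW beta * w * z + B) * (alpha EW beta * w)) z.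

(* The conclusion, parametrised by the error term err c1 z
   (c1 zstar^delta, or c1 zstar^3 log(1/zstar)). *)
Definition Conclusion (Q : R -> R) (EW nu betac : R) (err : R -> R -> R) : Prop :=
  exists eps, eps > 0 /\
  exists c1, c1 > 0 /\
  exists e1 : R -> R -> R,
    (forall beta B, 0 <= e1 beta B) /\
    (forall beta, betac <= beta <= betac + eps ->
       exists M d, d > 0 /\ forall B, 0 < B < d -> e1 beta B <= M) /\
    (forall r, r > 0 -> exists d, d > 0 /\
       forall B, 0 < B < d -> Rabs (e1 betac B) < r) /\
    (forall beta B z, betac <= beta <= betac + eps -> 0 < B < eps ->
       IsZstar Q EW beta B z ->
       z >= sqrt (EW * sinh beta) * B + sinh beta * nu * z - err c1 z - B * e1 beta B).

(* Main.v *)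
Require Import Defs.
From Stdlib Require Import Reals Lra Lia List.
From Stdlib Require Import RList Ranalysis RiemannInt_SF RiemannInt.
From Coquelicot Require Import Coquelicot.
From Stdlib Require Import ClassicalEpsilon Classical.
Open Scope R_scope.

Lemma IsStepFun_ext_open (f g : R -> R) (a b : R) :
  a <= b -> (forall x, a < x < b -> f x = g x) -> IsStepFun f a b -> IsStepFun g a b.
Proof.
  intros Hab Hfg [l [lf H]].
  exists l; exists lf.
  destruct H as (Hord & H0 & H1 & H2 & H3).
  repeat split; try assumption.
  intros i Hi x Hx.
  assert (Hin1 : In (pos_Rl l i) l).
  { apply RList_P3; exists i; split; [reflexivity| lia]. }
  assert (Hin2 : In (pos_Rl l (S i)) l).
  { apply RList_P3; exists (S i); split; [reflexivity| lia]. }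
  pose proof (RList_P5 l _ Hord Hin1) as L1.
  pose proof (RList_P7 l _ Hord Hin2) as L2.
  rewrite H0 in L1; rewrite H1 in L2.
  rewrite Rmin_left in L1 by lra. rewrite Rmax_right in L2 by lra.
  unfold open_interval in Hx.
  rewrite <- Hfg by lra.
  apply (H3 i Hi x Hx).
Qed.

Lemma RiemannInt_SF_ext_open (a b : R) (f g : StepFun a b) :
  a <= b -> (forall x, a < x < b -> f x = g x) -> RiemannInt_SF f = RiemannInt_SF g.
Proof.
  intros Hab H. apply Rle_antisym; apply StepFun_P37; auto; intros x Hx; rewrite H; auto; lra.
Qed.

Lemma mono_steps (f : R -> R) (h : R) (Hh : 0 < h) :
  forall (k : nat) (a c : R), c = a + INR k * h ->
  (forall x y, a <= x -> x <= y -> y <= c -> f x <= f y) ->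
  { phi : StepFun a c & { psi : StepFun a c |
     (forall t, a <= t <= c -> Rabs (f t - phi t) <= psi t) /\
     RiemannInt_SF psi = h * (f c - f a) } }.
Proof.
  induction k as [|k IH]; intros a c Hc Hmon.
  - simpl in Hc. replace c with a by lra.
    exists (mkStepFun (StepFun_P4 a a (f a))).
    exists (mkStepFun (StepFun_P4 a a 0)).
    split.
    + intros t Ht. replace t with a by lra. simpl. unfold fct_cte.
      rewrite Rminus_diag, Rabs_R0. lra.
    + rewrite StepFun_P18. lra.
  - set (p := a + h).
    assert (Hc' : c = p + INR k * h) by (rewrite S_INR in Hc; unfold p; lra).
    assert (Hk : 0 <= INR k * h) by (apply Rmult_le_pos; [apply pos_INR| lra]).
    assert (Hap : a <= p) by (unfold p; lra).
    assert (Hpc : p <= c) by lra.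
    destruct (IH p c Hc') as [phik [psik [E1 E2]]].
    { intros x y Hx Hxy Hy. apply Hmon; lra. }
    set (phif := fun t => if Rle_dec t p then f a else phik t).
    set (psif := fun t => if Rle_dec t p then f p - f a else psik t).
    assert (S1 : IsStepFun phif a p).
    { apply (IsStepFun_ext_open (fct_cte (f a))); auto.
      - intros x Hx. unfold phif, fct_cte. destruct (Rle_dec x p); lra.
      - apply StepFun_P4. }
    assert (S2 : IsStepFun phif p c).
    { apply (IsStepFun_ext_open phik); auto.
      - intros x Hx. unfold phif. destruct (Rle_dec x p); [lra| reflexivity].
      - apply (pre phik). }
    assert (T1 : IsStepFun psif a p).
    { apply (IsStepFun_ext_open (fct_cte (f p - f a))); auto.
      - intros x Hx. unfold psif, fct_cte. destruct (Rle_dec x p); lra.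
      - apply StepFun_P4. }
    assert (T2 : IsStepFun psif p c).
    { apply (IsStepFun_ext_open psik); auto.
      - intros x Hx. unfold psif. destruct (Rle_dec x p); [lra| reflexivity].
      - apply (pre psik). }
    exists (mkStepFun (StepFun_P46 S1 S2)).
    exists (mkStepFun (StepFun_P46 T1 T2)).
    split.
    + intros t Ht. simpl. unfold phif, psif. destruct (Rle_dec t p).
      * assert (f a <= f t) by (apply Hmon; lra).
        assert (f t <= f p) by (apply Hmon; lra).
        rewrite Rabs_right by lra. lra.
      * apply E1. lra.
    + rewrite <- (StepFun_P43 T1 T2).
      assert (X1 : RiemannInt_SF (mkStepFun T1) = RiemannInt_SF (mkStepFun (StepFun_P4 a p (f p - f a)))).
      { apply RiemannInt_SF_ext_open; auto. intros x Hx; simpl; unfold psif, fct_cte.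
        destruct (Rle_dec x p); lra. }
      assert (X2 : RiemannInt_SF (mkStepFun T2) = RiemannInt_SF psik).
      { apply RiemannInt_SF_ext_open; auto. intros x Hx; simpl; unfold psif.
        destruct (Rle_dec x p); [lra|reflexivity]. }
      rewrite X1, X2, StepFun_P18, E2. unfold p. ring.
Qed.

Lemma mono_integrable (f : R -> R) (a b : R) :
  a <= b -> (forall x y, a <= x -> x <= y -> y <= b -> f x <= f y) ->
  Riemann_integrable f a b.
Proof.
  intros Hab Hmon.
  destruct (Rle_lt_dec b a) as [E|Hlt].
  { replace b with a by lra. apply RiemannInt_P7. }
  intros eps.
  assert (Hf : f a <= f b) by (apply Hmon; lra).
  destruct (constructive_indefinite_description _
      (INR_unbounded ((b - a) * (f b - f a) / eps))) as [n Hn].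
  assert (Hn0 : (0 < n)%nat).
  { destruct n; [|lia]. simpl in Hn.
    assert (0 <= (b - a) * (f b - f a) / eps).
    { apply Rmult_le_pos; [apply Rmult_le_pos; lra| left; apply Rinv_0_lt_compat, cond_pos]. }
    lra. }
  assert (HnR : 0 < INR n) by (apply lt_0_INR; lia).
  set (h := (b - a) / INR n).
  assert (Hh : 0 < h) by (unfold h; apply Rdiv_lt_0_compat; lra).
  destruct (mono_steps f h Hh n a b) as [phi [psi [E1 E2]]].
  { unfold h. field. lra. }
  { auto. }
  exists phi, psi. split.
  - intros t Ht. rewrite Rmin_left in Ht by lra. rewrite Rmax_right in Ht by lra. auto.
  - rewrite E2. unfold h. rewrite Rabs_right.
    2:{ apply Rle_ge, Rmult_le_pos; [left; auto| lra]. }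
    pose proof (cond_pos eps) as He.
    apply (Rmult_lt_reg_r (INR n / eps)).
    { apply Rdiv_lt_0_compat; lra. }
    replace ((b - a) / INR n * (f b - f a) * (INR n / eps)) with ((b - a) * (f b - f a) / eps) by (field; lra).
    replace (eps * (INR n / eps)) with (INR n) by (field; lra). lra.
Qed.

Lemma tanh_exp x : tanh x = 1 - 2 / (exp (2 * x) + 1).
Proof.
  unfold tanh, sinh, cosh.
  assert (E : exp (2 * x) = exp x * exp x) by (rewrite <- exp_plus; f_equal; ring).
  assert (E2 : exp (- x) = / exp x) by apply exp_Ropp.
  pose proof (exp_pos x).
  rewrite E, E2. field. split; nra.
Qed.

Lemma tanh_le x y : x <= y -> tanh x <= tanh y.
Proof.
  intros H. rewrite !tanh_exp.
  assert (exp (2 * x) <= exp (2 * y)).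
  { destruct (Req_dec x y) as [->|]; [lra|]. left; apply exp_increasing; lra. }
  pose proof (exp_pos (2*x)).
  assert (2 / (exp (2 * y) + 1) <= 2 / (exp (2 * x) + 1)).
  { unfold Rdiv. apply Rmult_le_compat_l; [lra|]. apply Rinv_le_contravar; lra. }
  lra.
Qed.

Lemma tanh_le1 x : tanh x <= 1.
Proof.
  rewrite tanh_exp. pose proof (exp_pos (2*x)).
  assert (0 < 2 / (exp (2 * x) + 1)) by (apply Rdiv_lt_0_compat; lra). lra.
Qed.

Lemma tanh_0 : tanh 0 = 0.
Proof. rewrite tanh_exp. rewrite Rmult_0_r, exp_0. field. Qed.

Lemma tanh_pos x : 0 < x -> 0 < tanh x.
Proof.
  intros H. rewrite tanh_exp.
  assert (1 < exp (2 * x)) by (rewrite <- exp_0; apply exp_increasing; lra).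
  assert (2 / (exp (2 * x) + 1) < 1).
  { apply (Rmult_lt_reg_r (exp (2 * x) + 1)); [lra|].
    unfold Rdiv. rewrite Rmult_assoc, Rinv_l by lra. lra. }
  lra.
Qed.

Lemma tanh_nonneg x : 0 <= x -> 0 <= tanh x.
Proof.
  intros H. destruct (Req_dec x 0) as [->|]. rewrite tanh_0; lra.
  left; apply tanh_pos; lra.
Qed.

Lemma cosh_pos x : 0 < cosh x.
Proof. unfold cosh. pose proof (exp_pos x). pose proof (exp_pos (-x)). lra. Qed.

Lemma cosh2_sinh2 x : cosh x * cosh x - sinh x * sinh x = 1.
Proof.
  unfold cosh, sinh.
  assert (exp x * exp (- x) = 1) by (rewrite <- exp_plus; replace (x + - x) with 0 by ring; apply exp_0).
  field_simplify. nra.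
Qed.

Lemma derive_tanh x : derivable_pt_lim tanh x (1 - tanh x * tanh x).
Proof.
  assert (H := derivable_pt_lim_div sinh cosh x (cosh x) (sinh x)
    (derivable_pt_lim_sinh x) (derivable_pt_lim_cosh x)).
  assert (Hc := cosh_pos x).
  specialize (H ltac:(lra)).
  replace (1 - tanh x * tanh x) with ((cosh x * cosh x - sinh x * sinh x) / (cosh x)²).
  - exact H.
  - unfold tanh, Rsqr. field. lra.
Qed.

Lemma incr_from_deriv (f f' : R -> R) (a b : R) :
  a <= b -> (forall c, a <= c <= b -> derivable_pt_lim f c (f' c)) ->
  (forall c, a <= c <= b -> 0 <= f' c) -> f a <= f b.
Proof.
  intros Hab Hd Hp. destruct (Req_dec a b) as [->|Hne]; [lra|].
  destruct (MVT_cor2 f f' a b ltac:(lra) Hd) as [c [Hc1 Hc2]].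
  assert (0 <= f' c * (b - a)) by (apply Rmult_le_pos; [apply Hp; lra| lra]). lra.
Qed.

Lemma sincr_from_deriv (f f' : R -> R) (a b : R) :
  a < b -> (forall c, a <= c <= b -> derivable_pt_lim f c (f' c)) ->
  (forall c, a < c < b -> 0 < f' c) -> f a < f b.
Proof.
  intros Hab Hd Hp.
  destruct (MVT_cor2 f f' a b ltac:(lra) Hd) as [c [Hc1 Hc2]].
  assert (0 < f' c * (b - a)) by (apply Rmult_lt_0_compat; [apply Hp; lra| lra]). lra.
Qed.

Definition phi (y : R) := y - tanh y.

Lemma derive_phi x : derivable_pt_lim phi x (tanh x * tanh x).
Proof.
  unfold phi.
  replace (tanh x * tanh x) with (1 - (1 - tanh x * tanh x)) by ring.
  apply derivable_pt_lim_minus; [apply derivable_pt_lim_id| apply derive_tanh].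
Qed.

Lemma phi_le x y : x <= y -> phi x <= phi y.
Proof.
  intros H. apply (incr_from_deriv phi (fun t => tanh t * tanh t)); auto.
  - intros; apply derive_phi.
  - intros; nra.
Qed.

Lemma phi_0 : phi 0 = 0.
Proof. unfold phi; rewrite tanh_0; ring. Qed.

Lemma phi_pos y : 0 < y -> 0 < phi y.
Proof.
  intros H. rewrite <- phi_0.
  apply (sincr_from_deriv phi (fun t => tanh t * tanh t)); auto.
  - intros; apply derive_phi.
  - intros c Hc. pose proof (tanh_pos c ltac:(lra)). nra.
Qed.

Lemma phi_nonneg y : 0 <= y -> 0 <= phi y.
Proof. intros; rewrite <- phi_0; apply phi_le; auto. Qed.

Lemma tanh_le_id y : 0 <= y -> tanh y <= y.
Proof. intros H; pose proof (phi_nonneg y H); unfold phi in *; lra. Qed.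

Lemma phi_le_cube y : 0 <= y -> phi y <= y ^ 3.
Proof.
  intros H.
  assert (0 <= y ^ 3 - phi y - (0 ^ 3 - phi 0)).
  { pose proof (incr_from_deriv (fun t => t ^ 3 - phi t) (fun t => 3 * t ^ 2 - tanh t * tanh t) 0 y H) as K.
    assert (0 ^ 3 - phi 0 <= y ^ 3 - phi y); [|lra].
    apply K.
    - intros c Hc. apply derivable_pt_lim_minus; [| apply derive_phi].
      replace (3 * c ^ 2) with (INR 3 * c ^ Nat.pred 3) by (simpl; ring).
      apply derivable_pt_lim_pow.
    - intros c Hc. pose proof (tanh_nonneg c ltac:(lra)). pose proof (tanh_le_id c ltac:(lra)). nra. }
  rewrite phi_0 in *. lra.
Qed.

Lemma phi_le_id y : 0 <= y -> phi y <= y.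
Proof. intros H; pose proof (tanh_nonneg y H); unfold phi; lra. Qed.

Lemma IsExp_ub Q g m : IsExp Q g m ->
  forall c d (pr : Riemann_integrable (fun u => g (Q u)) c d),
  0 < c -> c < d -> d < 1 -> RiemannInt pr <= m.
Proof.
  intros [H _] c d pr H1 H2 H3. apply H. exists c, d, pr. auto.
Qed.

Lemma IsExp_least Q g m : IsExp Q g m ->
  forall M, (forall c d (pr : Riemann_integrable (fun u => g (Q u)) c d),
  0 < c -> c < d -> d < 1 -> RiemannInt pr <= M) -> m <= M.
Proof.
  intros [_ H] M HM. apply H. intros x (c & d & pr & H1 & H2 & H3 & <-). auto.
Qed.

Lemma IsExp_approx Q g m : IsExp Q g m -> forall eta, 0 < eta ->
  exists c d (pr : Riemann_integrable (fun u => g (Q u)) c d),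
  0 < c /\ c < d /\ d < 1 /\ m - eta < RiemannInt pr.
Proof.
  intros H eta Heta. apply NNPP. intro N.
  assert (m <= m - eta); [|lra].
  apply (IsExp_least Q g m H). intros c d pr H1 H2 H3.
  apply Rnot_lt_le. intro L. apply N. exists c, d, pr. auto.
Qed.

Lemma comp_integrable Q g : is_quantile Q ->
  (forall x y, 0 <= x -> x <= y -> g x <= g y) ->
  forall c d, 0 < c -> c <= d -> d < 1 -> Riemann_integrable (fun u => g (Q u)) c d.
Proof.
  intros [HQ1 HQ2] Hg c d H1 H2 H3. apply mono_integrable; auto.
  intros x y Hx Hxy Hy. apply Hg.
  - apply HQ2; lra.
  - apply HQ1; lra.
Qed.

Lemma int_nonneg f a b (pr : Riemann_integrable f a b) :
  a <= b -> (forall x, a < x < b -> 0 <= f x) -> 0 <= RiemannInt pr.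
Proof.
  intros Hab H.
  assert (0 * (b - a) <= RiemannInt pr); [|lra].
  rewrite <- (RiemannInt_P15 (RiemannInt_P14 a b 0)).
  apply RiemannInt_P19; auto; intros; unfold fct_cte; auto.
Qed.

Lemma int_enlarge f c c1 d1 d
  (pr1 : Riemann_integrable f c1 d1) (pr : Riemann_integrable f c d) :
  (forall c' d', c <= c' -> c' <= d' -> d' <= d -> Riemann_integrable f c' d') ->
  c <= c1 -> c1 <= d1 -> d1 <= d -> (forall x, c < x < d -> 0 <= f x) ->
  RiemannInt pr1 <= RiemannInt pr.
Proof.
  intros Hint H1 H2 H3 Hp.
  pose proof (Hint c c1 ltac:(lra) ltac:(lra) ltac:(lra)) as p1.
  pose proof (Hint c1 d ltac:(lra) ltac:(lra) ltac:(lra)) as p2.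
  pose proof (Hint d1 d ltac:(lra) ltac:(lra) ltac:(lra)) as p3.
  rewrite <- (RiemannInt_P26 p1 p2 pr).
  rewrite <- (RiemannInt_P26 pr1 p3 p2).
  assert (0 <= RiemannInt p1) by (apply int_nonneg; auto; intros; apply Hp; lra).
  assert (0 <= RiemannInt p3) by (apply int_nonneg; auto; intros; apply Hp; lra).
  lra.
Qed.

Lemma int_comb f g a b l (pr1 : Riemann_integrable f a b) (pr2 : Riemann_integrable g a b) :
  exists pr3 : Riemann_integrable (fun x => f x + l * g x) a b,
    RiemannInt pr3 = RiemannInt pr1 + l * RiemannInt pr2.
Proof.
  exists (RiemannInt_P10 l pr1 pr2). apply RiemannInt_P13.
Qed.

Lemma int_mono f g a b (pr1 : Riemann_integrable f a b) (pr2 : Riemann_integrable g a b) :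
  a <= b -> (forall x, a < x < b -> f x <= g x) -> RiemannInt pr1 <= RiemannInt pr2.
Proof. intros; apply RiemannInt_P19; auto. Qed.

Definition mm (y : R) := Rmin y (y ^ 3).

Lemma mm_le x y : 0 <= x -> x <= y -> mm x <= mm y.
Proof.
  intros H1 H2. unfold mm. apply Rmin_glb.
  - eapply Rle_trans; [apply Rmin_l| lra].
  - eapply Rle_trans; [apply Rmin_r| apply pow_incr; auto].
Qed.

Lemma mm_nonneg y : 0 <= y -> 0 <= mm y.
Proof. intros H. unfold mm. apply Rmin_glb; auto. apply pow_le; auto. Qed.

Lemma phi_le_mm y : 0 <= y -> phi y <= mm y.
Proof. intros H. unfold mm. apply Rmin_glb; [apply phi_le_id| apply phi_le_cube]; auto. Qed.

Lemma mm_shift x B : 0 <= x -> 0 <= B -> mm (x + B) <= 8 * mm x + 8 * B ^ 3.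
Proof.
  intros Hx HB.
  assert (0 <= mm x) by (apply mm_nonneg; auto).
  destruct (Rle_lt_dec B x).
  - apply Rle_trans with (mm (2 * x)). apply mm_le; lra.
    unfold mm. assert (0 <= B ^ 3) by (apply pow_le; auto).
    unfold Rmin. destruct (Rle_dec (2*x) ((2*x)^3)); destruct (Rle_dec x (x^3)); simpl in *; nra.
  - apply Rle_trans with ((x + B) ^ 3). unfold mm; apply Rmin_r.
    assert ((x + B) ^ 3 <= (2 * B) ^ 3) by (apply pow_incr; lra).
    simpl in *; nra.
Qed.

Lemma pointwise_lower a B z w : 0 <= a -> 0 <= B -> 0 < z -> 0 <= w ->
  a * a * z * w ^ 2 + a * B * w <=
  tanh (a * w * z + B) * (a * w) + 8 * (a * w * mm (a * w * z)) + 8 * a * B ^ 3 * w.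
Proof.
  intros Ha HB Hz Hw.
  set (x := a * w * z).
  assert (Hx : 0 <= x) by (unfold x; apply Rmult_le_pos; [apply Rmult_le_pos|]; lra).
  assert (Haw : 0 <= a * w) by (apply Rmult_le_pos; lra).
  pose proof (phi_le_mm (x + B) ltac:(lra)) as P1.
  pose proof (mm_shift x B Hx HB) as P2.
  unfold phi in P1.
  assert (E : a * a * z * w ^ 2 + a * B * w = (x + B) * (a * w)) by (unfold x; ring).
  rewrite E.
  assert ((x + B - tanh (x + B)) * (a * w) <= (8 * mm x + 8 * B ^ 3) * (a * w)).
  { apply Rmult_le_compat_r; auto. lra. }
  nra.
Qed.

Lemma approx_le_lim X z C : 0 <= C -> (forall eta, 0 < eta -> X - C * eta <= z) -> X <= z.
Proof.
  intros HC H. apply Rnot_lt_le. intro L.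
  set (eta := (X - z) / (2 * (C + 1))).
  assert (0 < eta) by (unfold eta; apply Rdiv_lt_0_compat; lra).
  specialize (H eta H0).
  assert (C * eta < X - z).
  { unfold eta. apply (Rmult_lt_reg_r (2 * (C+1))); [lra|].
    replace (C * ((X - z) / (2 * (C + 1))) * (2 * (C + 1))) with (C * (X - z)) by (field; lra).
    nra. }
  lra.
Qed.

Lemma core_lower (Q : R -> R) (HQ : is_quantile Q) (EW EW2 : R)
  (HEW : IsExp Q (fun w => w) EW) (HEW2 : IsExp Q (fun w => w ^ 2) EW2)
  (a B z M : R) (Ha : 0 <= a) (HB : 0 <= B) (Hz : 0 < z)
  (HZ : IsExp Q (fun w => tanh (a * w * z + B) * (a * w)) z)
  (HM : forall c d (pr : Riemann_integrable (fun u => (fun w => a * w * mm (a * w * z)) (Q u)) c d),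
        0 < c -> c < d -> d < 1 -> RiemannInt pr <= M) :
  a * EW * B + a * a * EW2 * z - 8 * M - 8 * a * EW * B ^ 3 <= z.
Proof.
  assert (HQ' := HQ); unfold is_quantile in HQ'; destruct HQ' as [HQ1 HQ2].
  assert (Hint : forall g, (forall x y, 0 <= x -> x <= y -> g x <= g y) ->
     forall c d, 0 < c -> c <= d -> d < 1 -> Riemann_integrable (fun u => g (Q u)) c d).
  { intros g Hg. apply comp_integrable; auto. }
  assert (M1' : forall x y, 0 <= x -> x <= y -> (fun w : R => w) x <= (fun w : R => w) y) by (simpl; auto).
  assert (M2' : forall x y, 0 <= x -> x <= y -> (fun w : R => w ^ 2) x <= (fun w : R => w ^ 2) y)
    by (intros; cbv beta; apply pow_incr; auto).
  assert (M3' : forall x y, 0 <= x -> x <= y -> (fun w => a * w * mm (a * w * z)) x <= (fun w => a * w * mm (a * w * z)) y).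
  { intros x y Hx Hxy; simpl. apply Rmult_le_compat.
    - apply Rmult_le_pos; lra.
    - apply mm_nonneg. apply Rmult_le_pos; [apply Rmult_le_pos|]; lra.
    - apply Rmult_le_compat_l; lra.
    - apply mm_le. apply Rmult_le_pos; [apply Rmult_le_pos|]; lra.
      apply Rmult_le_compat_r; [lra|]. apply Rmult_le_compat_l; lra. }
  assert (MF : forall x y, 0 <= x -> x <= y -> (fun w => tanh (a * w * z + B) * (a * w)) x <= (fun w => tanh (a * w * z + B) * (a * w)) y).
  { intros x y Hx Hxy; simpl. apply Rmult_le_compat.
    - apply tanh_nonneg. assert (0 <= a * x * z) by (apply Rmult_le_pos; [apply Rmult_le_pos|]; lra). lra.
    - apply Rmult_le_pos; lra.
    - apply tanh_le. assert (a * x * z <= a * y * z) by (apply Rmult_le_compat_r; [lra|]; apply Rmult_le_compat_l; lra). lra.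
    - apply Rmult_le_compat_l; lra. }
  apply (approx_le_lim _ _ (a * a * z + a * B)).
  { assert (0 <= a * a * z) by (apply Rmult_le_pos; [apply Rmult_le_pos|]; lra).
    assert (0 <= a * B) by (apply Rmult_le_pos; lra). lra. }
  intros eta Heta.
  destruct (IsExp_approx Q _ EW HEW eta Heta) as (c1 & d1 & p1 & Hc1 & Hcd1 & Hd1 & E1).
  destruct (IsExp_approx Q _ EW2 HEW2 eta Heta) as (c2 & d2 & p2 & Hc2 & Hcd2 & Hd2 & E2).
  set (c := Rmin c1 c2). set (d := Rmax d1 d2).
  assert (Hc : 0 < c) by (unfold c; apply Rmin_glb_lt; auto).
  assert (Hd : d < 1) by (unfold d; apply Rmax_lub_lt; auto).
  assert (Hcc1 : c <= c1) by apply Rmin_l. assert (Hcc2 : c <= c2) by apply Rmin_r.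
  assert (Hdd1 : d1 <= d) by apply RmaxLess1. assert (Hdd2 : d2 <= d) by apply RmaxLess2.
  assert (Hcd : c < d) by lra.
  pose proof (Hint _ M1' c d Hc ltac:(lra) Hd) as q1.
  pose proof (Hint _ M2' c d Hc ltac:(lra) Hd) as q2.
  pose proof (Hint _ M3' c d Hc ltac:(lra) Hd) as q3.
  pose proof (Hint _ MF c d Hc ltac:(lra) Hd) as qF.
  assert (Q0 : forall x, c < x < d -> 0 <= Q x) by (intros; apply HQ2; lra).
  assert (I1lo : RiemannInt p1 <= RiemannInt q1).
  { apply (int_enlarge _ c c1 d1 d); try lra.
    - intros; apply (Hint (fun w => w) M1'); auto; lra.
    - intros; simpl; apply Q0; auto. }
  assert (I2lo : RiemannInt p2 <= RiemannInt q2).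
  { apply (int_enlarge _ c c2 d2 d); try lra.
    - intros; apply (Hint (fun w => w ^ 2) M2'); auto; lra.
    - intros; cbv beta; apply pow_le; apply Q0; auto. }
  assert (I1hi : RiemannInt q1 <= EW) by (apply (IsExp_ub Q _ EW HEW); auto).
  assert (I3hi : RiemannInt q3 <= M) by (apply HM; auto).
  assert (IFhi : RiemannInt qF <= z) by (apply (IsExp_ub Q _ z HZ); auto).
  destruct (int_comb _ _ c d (a * a * z) (RiemannInt_P14 c d 0) q2) as [j1 J1].
  destruct (int_comb _ _ c d (a * B) j1 q1) as [j2 J2].
  destruct (int_comb _ _ c d 8 qF q3) as [j3 J3].
  destruct (int_comb _ _ c d (8 * a * B ^ 3) j3 q1) as [j4 J4].
  assert (L : RiemannInt j2 <= RiemannInt j4).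
  { apply int_mono; [lra|]. intros x Hx. unfold fct_cte. simpl.
    pose proof (pointwise_lower a B z (Q x) Ha HB Hz (Q0 x Hx)). simpl in H. lra. }
  rewrite J2, J1, J4, J3, (RiemannInt_P15 (RiemannInt_P14 c d 0)) in L.
  assert (0 <= a * a * z) by (apply Rmult_le_pos; [apply Rmult_le_pos|]; lra).
  assert (0 <= a * B) by (apply Rmult_le_pos; lra).
  assert (0 <= 8 * a * B ^ 3) by (apply Rmult_le_pos; [lra| apply pow_le; lra]).
  assert (a * a * z * (EW2 - eta) <= a * a * z * RiemannInt q2) by (apply Rmult_le_compat_l; lra).
  assert (a * B * (EW - eta) <= a * B * RiemannInt q1) by (apply Rmult_le_compat_l; lra).
  assert (8 * a * B ^ 3 * RiemannInt q1 <= 8 * a * B ^ 3 * EW) by (apply Rmult_le_compat_l; lra).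
  nra.
Qed.

Lemma Q_pos_somewhere Q (HQ : is_quantile Q) EW (HEW : IsExp Q (fun w => w) EW) :
  0 < EW -> exists u1, 0 < u1 < 1 /\ 0 < Q u1.
Proof.
  intros Hpos.
  destruct (IsExp_approx Q _ EW HEW EW Hpos) as (c & d & pr & Hc & Hcd & Hd & E).
  apply NNPP; intro N.
  assert (RiemannInt pr <= 0).
  { apply Rle_trans with (RiemannInt (RiemannInt_P14 c d 0)).
    2:{ rewrite RiemannInt_P15; lra. }
    apply RiemannInt_P19; [lra|]. intros x Hx. unfold fct_cte.
    apply Rnot_lt_le. intro L. apply N. exists x. split; [lra| auto]. }
  lra.
Qed.

Lemma sinh_le x y : x <= y -> sinh x <= sinh y.
Proof. intros H. destruct (Req_dec x y) as [->|]; [lra|]. left; apply sinh_lt; lra. Qed.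

Lemma sqrt_EW_sinh EW s : 0 < EW -> 0 <= s -> sqrt (EW * s) = sqrt (s / EW) * EW.
Proof.
  intros H1 H2.
  replace (EW * s) with (EW * EW * (s / EW)) by (field; lra).
  rewrite sqrt_mult_alt by nra.
  rewrite sqrt_square by lra. ring.
Qed.

Lemma alpha_sq EW b : 0 < EW -> 0 <= sinh b -> alpha EW b * alpha EW b = sinh b / EW.
Proof.
  intros H1 H2. unfold alpha. apply sqrt_sqrt. unfold Rdiv; apply Rmult_le_pos; [lra| left; apply Rinv_0_lt_compat; lra].
Qed.

Lemma alpha_nonneg EW b : 0 <= alpha EW b.
Proof. unfold alpha; apply sqrt_pos. Qed.

Lemma alpha_le EW b1 b2 : 0 < EW -> b1 <= b2 -> alpha EW b1 <= alpha EW b2.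
Proof.
  intros H1 H2. unfold alpha. apply sqrt_le_1_alt.
  unfold Rdiv. apply Rmult_le_compat_r; [left; apply Rinv_0_lt_compat; lra|]. apply sinh_le; auto.
Qed.

Definition Setup (Q : R -> R) (EW EW2 : R) : Prop :=
  0 < EW /\ 0 < EW2 /\ exists u1, 0 < u1 < 1 /\ 0 < Q u1.

Lemma get_setup Q (HQ : is_quantile Q) EW EW2
  (HEW : IsExp Q (fun w => w) EW) (HEW2 : IsExp Q (fun w => w ^ 2) EW2) :
  0 < EW -> Setup Q EW EW2.
Proof.
  intros Hpos.
  destruct (Q_pos_somewhere Q HQ EW HEW Hpos) as [u1 [Hu1 Hq]].
  assert (HQ' := HQ); unfold is_quantile in HQ'; destruct HQ' as [HQ1 HQ2].
  assert (M2' : forall x y, 0 <= x -> x <= y -> (fun w : R => w ^ 2) x <= (fun w : R => w ^ 2) y)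
    by (intros; cbv beta; apply pow_incr; auto).
  set (u2 := (u1 + 1) / 2).
  pose proof (comp_integrable Q _ HQ M2' u1 u2 ltac:(lra) ltac:(unfold u2; lra) ltac:(unfold u2; lra)) as pr.
  assert (L := IsExp_ub Q _ EW2 HEW2 u1 u2 pr ltac:(lra) ltac:(unfold u2; lra) ltac:(unfold u2; lra)).
  assert (0 < RiemannInt pr).
  { apply Rlt_le_trans with (Q u1 ^ 2 * (u2 - u1)).
    - apply Rmult_lt_0_compat. apply pow_lt; auto. unfold u2; lra.
    - rewrite <- (RiemannInt_P15 (RiemannInt_P14 u1 u2 (Q u1 ^ 2))).
      apply RiemannInt_P19; [unfold u2; lra|]. intros x Hx. unfold fct_cte. cbv beta.
      apply pow_incr. split; [lra|]. apply HQ1; unfold u2 in *; lra. }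
  split; [auto| split; [lra| exists u1; auto]].
Qed.

Lemma betac_facts EW EW2 : 0 < EW -> 0 < EW2 ->
  let nu := EW2 / EW in let betac := arcsinh (1 / nu) in
  0 < nu /\ 0 < betac /\ sinh betac = 1 / nu.
Proof.
  intros H1 H2 nu betac.
  assert (0 < nu) by (unfold nu; apply Rdiv_lt_0_compat; auto).
  split; auto. split.
  - unfold betac. rewrite <- arcsinh_0. apply arcsinh_lt. apply Rdiv_lt_0_compat; lra.
  - unfold betac. apply sinh_arcsinh.
Qed.

Lemma assemble Q (HQ : is_quantile Q) EW EW2
  (HEW : IsExp Q (fun w => w) EW) (HEW2 : IsExp Q (fun w => w ^ 2) EW2) (HEWpos : 0 < EW)
  (HEW2pos : 0 < EW2) (err : R -> R -> R) (eps c1 : R) :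
  let nu := EW2 / EW in
  let betac := arcsinh (1 / nu) in
  eps > 0 -> c1 > 0 ->
  (forall beta B z, betac <= beta <= betac + eps -> 0 < B < eps -> IsZstar Q EW beta B z ->
     exists M, 8 * M <= err c1 z /\
     forall c d (pr : Riemann_integrable (fun u => (fun w => alpha EW beta * w * mm (alpha EW beta * w * z)) (Q u)) c d),
        0 < c -> c < d -> d < 1 -> RiemannInt pr <= M) ->
  Conclusion Q EW nu betac err.
Proof.
  intros nu betac Heps Hc1 HB.
  destruct (betac_facts EW EW2 HEWpos HEW2pos) as (Hnu & Hbc & Hsbc). fold nu betac in Hnu, Hbc, Hsbc.
  exists eps; split; auto. exists c1; split; auto.
  exists (fun beta B => 8 * alpha EW beta * EW * B ^ 2).
  split; [|split; [|split]].
  - intros beta B. pose proof (alpha_nonneg EW beta).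
    apply Rmult_le_pos; [| apply pow2_ge_0]. apply Rmult_le_pos; lra.
  - intros beta Hb. exists (8 * alpha EW beta * EW), 1. split; [lra|].
    intros B HB'. pose proof (alpha_nonneg EW beta).
    assert (B ^ 2 <= 1) by (simpl; nra).
    assert (0 <= 8 * alpha EW beta * EW) by (apply Rmult_le_pos; lra).
    replace (8 * alpha EW beta * EW) with (8 * alpha EW beta * EW * 1) at 2 by ring.
    apply Rmult_le_compat_l; auto.
  - intros r Hr. set (K := 8 * alpha EW betac * EW).
    assert (HK : 0 <= K) by (unfold K; pose proof (alpha_nonneg EW betac); apply Rmult_le_pos; lra).
    exists (Rmin 1 (r / (K + 1))). split.
    { apply Rmin_glb_lt; [lra|]. apply Rdiv_lt_0_compat; lra. }
    intros B HB'. fold K.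
    assert (B < 1) by (eapply Rlt_le_trans; [apply HB'| apply Rmin_l]).
    assert (B < r / (K + 1)) by (eapply Rlt_le_trans; [apply HB'| apply Rmin_r]).
    rewrite Rabs_right.
    2:{ apply Rle_ge, Rmult_le_pos; auto. apply pow2_ge_0. }
    assert (B ^ 2 <= B) by (simpl; nra).
    assert (K * B ^ 2 <= K * B) by (apply Rmult_le_compat_l; auto).
    assert (K * B < r).
    { apply Rle_lt_trans with ((K + 1) * B). nra.
      apply (Rmult_lt_reg_r (/ (K + 1))). apply Rinv_0_lt_compat; lra.
      replace ((K + 1) * B * / (K + 1)) with B by (field; lra). apply H0. }
    lra.
  - intros beta B z Hb HBe Hz.
    destruct (HB beta B z Hb HBe Hz) as [M [HM1 HM2]].
    destruct Hz as [Hz HZ].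
    assert (Hs : 0 < sinh beta).
    { apply Rlt_le_trans with (sinh betac). rewrite Hsbc. apply Rdiv_lt_0_compat; lra.
      apply sinh_le; lra. }
    pose proof (core_lower Q HQ EW EW2 HEW HEW2 (alpha EW beta) B z M (alpha_nonneg EW beta) ltac:(lra) Hz HZ HM2) as K.
    rewrite alpha_sq in K by lra.
    rewrite (sqrt_EW_sinh EW (sinh beta)) by lra. fold (alpha EW beta).
    assert (E : sinh beta / EW * EW2 * z = sinh beta * nu * z) by (unfold nu; field; lra).
    assert (E2 : sinh beta / EW * EW2 = sinh beta * nu) by (unfold nu; field; lra).
    apply Rle_ge.
    replace (alpha EW beta * EW * B + sinh beta * nu * z - err c1 z - B * (8 * alpha EW beta * EW * B ^ 2))
      with (alpha EW beta * EW * B + sinh beta / EW * EW2 * z - err c1 z - 8 * alpha EW beta * EW * B ^ 3)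
      by (rewrite E; ring).
    lra.
Qed.

Lemma IsExp_nonneg Q (HQ : is_quantile Q) g m :
  (forall x y, 0 <= x -> x <= y -> g x <= g y) -> (forall x, 0 <= x -> 0 <= g x) ->
  IsExp Q g m -> 0 <= m.
Proof.
  intros Hg Hp H.
  assert (HQ' := HQ); unfold is_quantile in HQ'; destruct HQ' as [HQ1 HQ2].
  pose proof (comp_integrable Q g HQ Hg (1/4) (3/4) ltac:(lra) ltac:(lra) ltac:(lra)) as pr.
  apply Rle_trans with (RiemannInt pr).
  - apply int_nonneg; [lra|]. intros; apply Hp, HQ2; lra.
  - apply (IsExp_ub Q g m H); lra.
Qed.

Lemma int_scale_bound Q (HQ : is_quantile Q) g m (K : R) (f : R -> R) :
  (forall x y, 0 <= x -> x <= y -> g x <= g y) -> IsExp Q g m -> 0 <= K ->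
  (forall w, 0 <= w -> f w <= K * g w) ->
  forall c d (pr : Riemann_integrable (fun u => f (Q u)) c d),
  0 < c -> c < d -> d < 1 -> RiemannInt pr <= K * m.
Proof.
  intros Hg H HK Hf c d pr Hc Hcd Hd.
  assert (HQ' := HQ); unfold is_quantile in HQ'; destruct HQ' as [HQ1 HQ2].
  pose proof (comp_integrable Q g HQ Hg c d Hc ltac:(lra) Hd) as q.
  destruct (int_comb _ _ c d K (RiemannInt_P14 c d 0) q) as [j J].
  apply Rle_trans with (RiemannInt j).
  - apply int_mono; [lra|]. intros x Hx. unfold fct_cte. rewrite Rplus_0_l. apply Hf, HQ2; lra.
  - rewrite J, RiemannInt_P15. rewrite Rmult_0_l, Rplus_0_l.
    apply Rmult_le_compat_l; auto. apply (IsExp_ub Q g m H); auto.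
Qed.

Lemma case1 (Q : R -> R) (HQ : is_quantile Q)
  (EW EW2 : R)
  (HEW : IsExp Q (fun w => w) EW) (HEW2 : IsExp Q (fun w => w ^ 2) EW2)
  (HEWpos : 0 < EW) :
  let nu := EW2 / EW in
  let betac := arcsinh (1 / nu) in
  (exists m4, IsExp Q (fun w => w ^ 4) m4) ->
     Conclusion Q EW nu betac (fun c1 z => c1 * Rpower z 3).
Proof.
  intros nu betac [m4 H4].
  destruct (get_setup Q HQ EW EW2 HEW HEW2 HEWpos) as (_ & HEW2pos & _).
  assert (M4' : forall x y, 0 <= x -> x <= y -> (fun w : R => w ^ 4) x <= (fun w : R => w ^ 4) y)
    by (intros; cbv beta; apply pow_incr; auto).
  assert (Hm4 : 0 <= m4).
  { apply (IsExp_nonneg Q HQ _ m4 M4'); auto. intros; cbv beta; apply pow_le; auto. }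
  set (amax := alpha EW (betac + 1)).
  assert (Ham : 0 <= amax) by apply alpha_nonneg.
  apply (assemble Q HQ EW EW2 HEW HEW2 HEWpos HEW2pos _ 1 (8 * amax ^ 4 * m4 + 1)); [lra| |].
  { assert (0 <= 8 * amax ^ 4 * m4) by (apply Rmult_le_pos; [apply Rmult_le_pos; [lra| apply pow_le; auto]| auto]). lra. }
  intros beta B z Hb HB [Hz HZ].
  set (a := alpha EW beta).
  assert (Ha : 0 <= a) by apply alpha_nonneg.
  assert (Haa : a <= amax) by (apply alpha_le; auto; unfold betac, nu in *; simpl in Hb; lra).
  exists (a ^ 4 * z ^ 3 * m4). split.
  - replace 3 with (INR 3) by (simpl; ring). rewrite Rpower_pow by auto.
    assert (a ^ 4 <= amax ^ 4) by (apply pow_incr; auto).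
    assert (0 <= z ^ 3) by (apply pow_le; lra).
    assert (a ^ 4 * m4 <= amax ^ 4 * m4) by (apply Rmult_le_compat_r; auto).
    assert (0 <= a ^ 4 * m4) by (apply Rmult_le_pos; auto; apply pow_le; auto).
    assert (a ^ 4 * m4 * z ^ 3 <= amax ^ 4 * m4 * z ^ 3) by (apply Rmult_le_compat_r; auto).
    nra.
  - intros c d pr Hc Hcd Hd.
    apply (int_scale_bound Q HQ (fun w => w ^ 4) m4 (a ^ 4 * z ^ 3) (fun w => a * w * mm (a * w * z)) M4' H4); auto.
    + apply Rmult_le_pos; apply pow_le; lra.
    + intros w Hw. cbv beta.
      assert (mm (a * w * z) <= (a * w * z) ^ 3) by (unfold mm; apply Rmin_r).
      assert (0 <= a * w) by (apply Rmult_le_pos; auto).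
      apply Rle_trans with (a * w * (a * w * z) ^ 3).
      * apply Rmult_le_compat_l; auto.
      * right; ring.
Qed.

Lemma deriv_rp (p u : R) : u < 1 ->
  derivable_pt_lim (fun u => Rpower (1 - u) p) u (- (p * Rpower (1 - u) (p - 1))).
Proof.
  intros Hu.
  assert (H1 : derivable_pt_lim (fun u => 1 - u) u (-1)).
  { replace (-1) with (0 - 1) by ring. apply derivable_pt_lim_minus.
    apply derivable_pt_lim_const. apply derivable_pt_lim_id. }
  assert (H2 := derivable_pt_lim_power (1 - u) p ltac:(lra)).
  assert (H3 := derivable_pt_lim_comp (fun u => 1 - u) (fun x => Rpower x p) u (-1) _ H1 H2).
  replace (- (p * Rpower (1 - u) (p - 1))) with (p * Rpower (1 - u) (p - 1) * -1) by ring.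
  exact H3.
Qed.

Lemma rp_cont (p u : R) : u < 1 -> continuous (fun u => Rpower (1 - u) p) u.
Proof.
  intros Hu. apply (ex_derive_continuous (K := R_AbsRing) (V := R_NormedModule)). exists (- (p * Rpower (1 - u) (p - 1))).
  apply is_derive_Reals. apply deriv_rp; auto.
Qed.

Lemma int_rpow (r c d : R) (pr : Riemann_integrable (fun u => Rpower (1 - u) (- r)) c d) :
  c <= d -> d < 1 -> r <> 1 ->
  RiemannInt pr = (Rpower (1 - c) (1 - r) - Rpower (1 - d) (1 - r)) / (1 - r).
Proof.
  intros Hcd Hd Hr.
  rewrite <- (RInt_Reals _ _ _ pr).
  apply is_RInt_unique.
  assert (E : (Rpower (1 - c) (1 - r) - Rpower (1 - d) (1 - r)) / (1 - r) =
     minus ((fun u => - Rpower (1 - u) (1 - r) / (1 - r)) d) ((fun u => - Rpower (1 - u) (1 - r) / (1 - r)) c)).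
  { unfold minus, plus, opp; simpl. field. lra. }
  rewrite E. apply (is_RInt_derive (V := R_CompleteNormedModule) (fun u => - Rpower (1 - u) (1 - r) / (1 - r)) (fun u => Rpower (1 - u) (- r))).
  - intros x Hx. rewrite Rmin_left in Hx by lra. rewrite Rmax_right in Hx by lra.
    apply is_derive_Reals.
    assert (K := deriv_rp (1 - r) x ltac:(lra)).
    replace (1 - r - 1) with (- r) in K by ring.
    assert (K2 := derivable_pt_lim_div_scal _ _ _ (1 - r) (derivable_pt_lim_opp _ _ _ K)).
    replace (- - ((1 - r) * Rpower (1 - x) (- r)) / (1 - r)) with (Rpower (1 - x) (- r)) in K2 by (field; lra).
    exact K2.
  - intros x Hx. rewrite Rmin_left in Hx by lra. rewrite Rmax_right in Hx by lra.
    apply rp_cont. lra.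
Qed.

Lemma int_rpow1 (c d : R) (pr : Riemann_integrable (fun u => Rpower (1 - u) (- 1)) c d) :
  c <= d -> d < 1 -> RiemannInt pr = ln (1 - c) - ln (1 - d).
Proof.
  intros Hcd Hd.
  rewrite <- (RInt_Reals _ _ _ pr).
  apply is_RInt_unique.
  assert (E : ln (1 - c) - ln (1 - d) =
     minus ((fun u => - ln (1 - u)) d) ((fun u => - ln (1 - u)) c)).
  { unfold minus, plus, opp; simpl. ring. }
  rewrite E. apply (is_RInt_derive (V := R_CompleteNormedModule) (fun u => - ln (1 - u)) (fun u => Rpower (1 - u) (- 1))).
  - intros x Hx. rewrite Rmin_left in Hx by lra. rewrite Rmax_right in Hx by lra.
    apply is_derive_Reals.
    assert (H1 : derivable_pt_lim (fun u => 1 - u) x (-1)).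
    { replace (-1) with (0 - 1) by ring. apply derivable_pt_lim_minus.
      apply derivable_pt_lim_const. apply derivable_pt_lim_id. }
    assert (H2 := derivable_pt_lim_ln (1 - x) ltac:(lra)).
    assert (H3 := derivable_pt_lim_comp (fun u => 1 - u) ln x (-1) _ H1 H2).
    assert (H4 := derivable_pt_lim_opp _ _ _ H3).
    replace (Rpower (1 - x) (-1)) with (- (/ (1 - x) * -1)).
    + exact H4.
    + replace (-1) with (- (1)) by ring. rewrite Rpower_Ropp, Rpower_1 by lra. ring.
  - intros x Hx. rewrite Rmin_left in Hx by lra. rewrite Rmax_right in Hx by lra.
    apply rp_cont. lra.
Qed.

Lemma Rpower_pos x y : 0 < Rpower x y.
Proof. unfold Rpower; apply exp_pos. Qed.

Lemma rp_anti x y p : 0 < x -> x <= y -> 0 <= p -> Rpower y (- p) <= Rpower x (- p).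
Proof.
  intros Hx Hxy Hp. rewrite !Rpower_Ropp.
  apply Rinv_le_contravar. apply Rpower_pos. apply Rle_Rpower_l; auto.
Qed.

Lemma rp_incr u u' p : u <= u' -> u' < 1 -> 0 <= p -> Rpower (1 - u) (- p) <= Rpower (1 - u') (- p).
Proof. intros; apply rp_anti; lra. Qed.

Lemma rp_mono_pos x y p : 0 < x -> x <= y -> 0 <= p -> Rpower x p <= Rpower y p.
Proof. intros; apply Rle_Rpower_l; auto. Qed.

Definition hfun (s g u : R) := (s * Rpower (1 - u) (- g)) * mm (s * Rpower (1 - u) (- g)).

Lemma hfun_incr s g : 0 <= s -> 0 <= g -> forall x y, x <= y -> y < 1 -> hfun s g x <= hfun s g y.
Proof.
  intros Hs Hg x y Hxy Hy. unfold hfun.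
  pose proof (rp_incr x y g Hxy Hy Hg).
  pose proof (Rpower_pos (1 - x) (- g)).
  assert (0 <= s * Rpower (1 - x) (- g)) by (apply Rmult_le_pos; lra).
  assert (s * Rpower (1 - x) (- g) <= s * Rpower (1 - y) (- g)) by (apply Rmult_le_compat_l; auto).
  apply Rmult_le_compat; auto. apply mm_nonneg; auto. apply mm_le; auto.
Qed.

Lemma hfun_int s g c d : 0 <= s -> 0 <= g -> c <= d -> d < 1 -> Riemann_integrable (hfun s g) c d.
Proof.
  intros. apply mono_integrable; auto. intros; apply hfun_incr; auto; lra.
Qed.

Lemma rpf_int p c d : 0 <= p -> c <= d -> d < 1 -> Riemann_integrable (fun u => Rpower (1 - u) (- p)) c d.
Proof.
  intros. apply mono_integrable; auto. intros; apply rp_incr; auto; lra.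
Qed.

Lemma rp_sq v g : 0 < v -> Rpower v (- g) * Rpower v (- g) = Rpower v (- (2 * g)).
Proof. intros. rewrite <- Rpower_plus. f_equal; ring. Qed.

Lemma hfun_le2 s g u : 0 <= s -> u < 1 -> hfun s g u <= s ^ 2 * Rpower (1 - u) (- (2 * g)).
Proof.
  intros Hs Hu. unfold hfun. set (x := s * Rpower (1 - u) (- g)).
  pose proof (Rpower_pos (1 - u) (- g)).
  assert (0 <= x) by (unfold x; apply Rmult_le_pos; lra).
  assert (mm x <= x) by (unfold mm; apply Rmin_l).
  apply Rle_trans with (x * x). apply Rmult_le_compat_l; auto.
  unfold x. rewrite <- rp_sq by lra. right; ring.
Qed.

Lemma hfun_le4 s g u : 0 <= s -> u < 1 -> hfun s g u <= s ^ 4 * Rpower (1 - u) (- (4 * g)).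
Proof.
  intros Hs Hu. unfold hfun. set (x := s * Rpower (1 - u) (- g)).
  pose proof (Rpower_pos (1 - u) (- g)).
  assert (0 <= x) by (unfold x; apply Rmult_le_pos; lra).
  assert (mm x <= x ^ 3) by (unfold mm; apply Rmin_r).
  apply Rle_trans with (x * x ^ 3). apply Rmult_le_compat_l; auto.
  unfold x.
  replace (- (4 * g)) with (- (2 * g) + - (2 * g)) by ring.
  rewrite Rpower_plus, <- !rp_sq by lra. right; ring.
Qed.

Lemma lam_pow s g k : 0 < s -> 0 < g -> Rpower (Rpower s (1 / g)) (INR k * g) = s ^ k.
Proof.
  intros Hs Hg. rewrite Rpower_mult. replace (1 / g * (INR k * g)) with (INR k) by (field; lra).
  apply Rpower_pow; auto.
Qed.

Lemma bound_A s g c d (pr : Riemann_integrable (hfun s g) c d) :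
  0 < s -> 0 < g < 1/2 -> c <= d -> d < 1 -> 1 - c <= Rpower s (1 / g) ->
  RiemannInt pr <= Rpower s (1 / g) / (1 - 2 * g).
Proof.
  intros Hs Hg Hcd Hd Hl. set (lam := Rpower s (1 / g)) in *.
  assert (Hlam : 0 < lam) by apply Rpower_pos.
  pose proof (rpf_int (2 * g) c d ltac:(lra) Hcd Hd) as q.
  destruct (int_comb _ _ c d (s ^ 2) (RiemannInt_P14 c d 0) q) as [j J].
  apply Rle_trans with (RiemannInt j).
  { apply int_mono; auto. intros x Hx. unfold fct_cte. rewrite Rplus_0_l. apply hfun_le2; lra. }
  rewrite J, RiemannInt_P15, Rmult_0_l, Rplus_0_l.
  rewrite (int_rpow (2 * g) c d q Hcd Hd ltac:(lra)).
  assert (E : s ^ 2 = Rpower lam (INR 2 * g)) by (unfold lam; rewrite lam_pow; auto; lra).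
  pose proof (Rpower_pos (1 - d) (1 - 2 * g)).
  assert (Rpower (1 - c) (1 - 2 * g) <= Rpower lam (1 - 2 * g)) by (apply rp_mono_pos; lra).
  assert (s ^ 2 * Rpower lam (1 - 2 * g) = lam).
  { rewrite E, <- Rpower_plus. replace (INR 2 * g + (1 - 2 * g)) with 1 by (simpl; ring).
    apply Rpower_1; auto. }
  assert (0 < s ^ 2) by (apply pow_lt; auto).
  unfold Rdiv. rewrite <- Rmult_assoc. apply Rmult_le_compat_r. left; apply Rinv_0_lt_compat; lra.
  apply Rle_trans with (s ^ 2 * Rpower lam (1 - 2 * g)); [|lra].
  apply Rmult_le_compat_l; lra.
Qed.

Lemma bound_B s g c d (pr : Riemann_integrable (hfun s g) c d) :
  0 < s -> 1/4 < g -> c <= d -> d < 1 -> Rpower s (1 / g) <= 1 - d ->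
  RiemannInt pr <= Rpower s (1 / g) / (4 * g - 1).
Proof.
  intros Hs Hg Hcd Hd Hl. set (lam := Rpower s (1 / g)) in *.
  assert (Hlam : 0 < lam) by apply Rpower_pos.
  pose proof (rpf_int (4 * g) c d ltac:(lra) Hcd Hd) as q.
  destruct (int_comb _ _ c d (s ^ 4) (RiemannInt_P14 c d 0) q) as [j J].
  apply Rle_trans with (RiemannInt j).
  { apply int_mono; auto. intros x Hx. unfold fct_cte. rewrite Rplus_0_l. apply hfun_le4; lra. }
  rewrite J, RiemannInt_P15, Rmult_0_l, Rplus_0_l.
  rewrite (int_rpow (4 * g) c d q Hcd Hd ltac:(lra)).
  assert (E : s ^ 4 = Rpower lam (INR 4 * g)) by (unfold lam; rewrite lam_pow; auto; lra).
  pose proof (Rpower_pos (1 - c) (1 - 4 * g)).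
  assert (Rpower (1 - d) (- (4 * g - 1)) <= Rpower lam (- (4 * g - 1))) by (apply rp_anti; lra).
  replace (1 - 4 * g) with (- (4 * g - 1)) by ring.
  assert (s ^ 4 * Rpower lam (- (4 * g - 1)) = lam).
  { rewrite E, <- Rpower_plus. replace (INR 4 * g + - (4 * g - 1)) with 1 by (simpl; ring).
    apply Rpower_1; auto. }
  assert (0 < s ^ 4) by (apply pow_lt; auto).
  replace (s ^ 4 * ((Rpower (1 - c) (- (4 * g - 1)) - Rpower (1 - d) (- (4 * g - 1))) / (- (4 * g - 1))))
    with (s ^ 4 * ((Rpower (1 - d) (- (4 * g - 1)) - Rpower (1 - c) (- (4 * g - 1))) / (4 * g - 1)))
    by (field; lra).
  unfold Rdiv. rewrite <- Rmult_assoc. apply Rmult_le_compat_r. left; apply Rinv_0_lt_compat; lra.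
  apply Rle_trans with (s ^ 4 * Rpower lam (- (4 * g - 1))); [|lra].
  pose proof (Rpower_pos (1 - c) (- (4 * g - 1))).
  apply Rmult_le_compat_l; lra.
Qed.

Lemma bound_B1 s c d (pr : Riemann_integrable (hfun s (1/4)) c d) :
  0 < s -> 0 < c -> c <= d -> d < 1 -> Rpower s 4 <= 1 - d ->
  RiemannInt pr <= Rpower s 4 * (- ln (Rpower s 4)).
Proof.
  intros Hs Hc Hcd Hd Hl. set (lam := Rpower s 4) in *.
  assert (Hlam : 0 < lam) by apply Rpower_pos.
  pose proof (rpf_int (4 * (1/4)) c d ltac:(lra) Hcd Hd) as q.
  destruct (int_comb _ _ c d (s ^ 4) (RiemannInt_P14 c d 0) q) as [j J].
  apply Rle_trans with (RiemannInt j).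
  { apply int_mono; auto. intros x Hx. unfold fct_cte. rewrite Rplus_0_l. apply hfun_le4; lra. }
  rewrite J, RiemannInt_P15, Rmult_0_l, Rplus_0_l.
  assert (q' : Riemann_integrable (fun u => Rpower (1 - u) (- 1)) c d).
  { apply (Riemann_integrable_ext (fun u => Rpower (1 - u) (- (4 * (1/4))))); auto.
    intros; f_equal; field. }
  replace (RiemannInt q) with (RiemannInt q').
  2:{ apply RiemannInt_ext. intros; f_equal; field. }
  rewrite (int_rpow1 c d q' Hcd Hd).
  assert (E : s ^ 4 = lam) by (unfold lam; replace 4 with (INR 4) by (simpl; ring); rewrite Rpower_pow; auto).
  rewrite E.
  assert (ln (1 - c) <= 0) by (rewrite <- ln_1; destruct (Req_dec c 0); [lra|]; left; apply ln_increasing; lra).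
  assert (ln lam <= ln (1 - d)) by (destruct (Req_dec lam (1 - d)) as [->|]; [lra| left; apply ln_increasing; lra]).
  apply Rmult_le_compat_l; lra.
Qed.

Lemma bound_total s g LB c d (pr : Riemann_integrable (hfun s g) c d) :
  0 < s -> 0 < g < 1/2 -> 0 <= LB -> 0 < c -> c <= d -> d < 1 ->
  (forall c' d' (pr' : Riemann_integrable (hfun s g) c' d'), 0 < c' -> c' <= d' -> d' < 1 ->
     Rpower s (1 / g) <= 1 - d' -> RiemannInt pr' <= Rpower s (1 / g) * LB) ->
  RiemannInt pr <= Rpower s (1 / g) * (1 / (1 - 2 * g) + LB).
Proof.
  intros Hs Hg HLB Hc Hcd Hd HB.
  set (lam := Rpower s (1 / g)) in *.
  assert (Hlam : 0 < lam) by apply Rpower_pos.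
  assert (0 < 1 / (1 - 2 * g)) by (apply Rdiv_lt_0_compat; lra).
  assert (0 <= lam * LB) by (apply Rmult_le_pos; lra).
  assert (E : lam / (1 - 2 * g) = lam * (1 / (1 - 2 * g))) by (field; lra).
  destruct (Rle_lt_dec (1 - c) lam).
  { pose proof (bound_A s g c d pr Hs Hg Hcd Hd r). fold lam in H1. nra. }
  destruct (Rle_lt_dec lam (1 - d)).
  { pose proof (HB c d pr Hc Hcd Hd r0). nra. }
  set (us := 1 - lam).
  pose proof (hfun_int s g c us ltac:(lra) ltac:(lra) ltac:(unfold us, lam in *; lra) ltac:(unfold us, lam in *; lra)) as p1.
  pose proof (hfun_int s g us d ltac:(lra) ltac:(lra) ltac:(unfold us, lam in *; lra) ltac:(unfold us, lam in *; lra)) as p2.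
  rewrite <- (RiemannInt_P26 p1 p2 pr).
  pose proof (HB c us p1 Hc ltac:(unfold us, lam in *; lra) ltac:(unfold us, lam in *; lra) ltac:(unfold us, lam in *; lra)).
  pose proof (bound_A s g us d p2 Hs Hg ltac:(unfold us, lam in *; lra) Hd ltac:(unfold us, lam in *; lra)) as K3. fold lam in K3.
  nra.
Qed.

Lemma bound_tau s g c d (pr : Riemann_integrable (hfun s g) c d) :
  0 < s -> 1/4 < g < 1/2 -> 0 < c -> c <= d -> d < 1 ->
  RiemannInt pr <= Rpower s (1 / g) * (1 / (1 - 2 * g) + 1 / (4 * g - 1)).
Proof.
  intros. apply bound_total; auto; try lra.
  - left; apply Rdiv_lt_0_compat; lra.
  - intros c' d' pr' H4 H5 H6 H7. pose proof (bound_B s g c' d' pr' H ltac:(lra) H5 H6 H7).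
    replace (Rpower s (1 / g) * (1 / (4 * g - 1))) with (Rpower s (1 / g) / (4 * g - 1)) by (field; lra).
    auto.
Qed.

Lemma bound_5 s c d (pr : Riemann_integrable (hfun s (1/4)) c d) :
  0 < s -> 0 < c -> c <= d -> d < 1 ->
  RiemannInt pr <= Rpower s 4 * (2 + Rmax 0 (- ln (Rpower s 4))).
Proof.
  intros Hs Hc Hcd Hd.
  assert (E1 : 1 / (1/4) = 4) by field.
  assert (E2 : 1 / (1 - 2 * (1/4)) = 2) by field.
  assert (K := bound_total s (1/4) (Rmax 0 (- ln (Rpower s 4))) c d pr Hs ltac:(lra) (Rmax_l _ _) Hc Hcd Hd).
  rewrite E1, E2 in K. apply K.
  intros c' d' pr' H4 H5 H6 H7.
  pose proof (bound_B1 s c' d' pr' Hs H4 H5 H6 H7).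
  eapply Rle_trans; [apply H|]. apply Rmult_le_compat_l. left; apply Rpower_pos. apply Rmax_r.
Qed.

Lemma Rpower_inv_base y g : 0 < y -> Rpower (/ y) g = Rpower y (- g).
Proof. intros. unfold Rpower. rewrite ln_Rinv by auto. f_equal; ring. Qed.

Lemma tail_Q Q tau : is_quantile Q -> PowerTail Q tau -> 1 < tau ->
  exists w0 A0, 0 < w0 /\ 0 < A0 /\
  forall u, 0 < u < 1 -> Q u <= Rmax w0 (A0 * Rpower (1 - u) (- (1 / (tau - 1)))).
Proof.
  intros HQ (CW & cW & w0 & H1 & H2 & H3 & Hb) Ht.
  assert (HQ' := HQ); unfold is_quantile in HQ'; destruct HQ' as [HQ1 HQ2].
  set (g := 1 / (tau - 1)).
  assert (Hg : 0 < g) by (unfold g; apply Rdiv_lt_0_compat; lra).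
  exists w0, (2 * Rpower CW g). split; [lra|]. split.
  { pose proof (Rpower_pos CW g); lra. }
  intros u Hu.
  destruct (Rle_lt_dec (Q u) w0) as [Hle|Hgt].
  { eapply Rle_trans; [apply Hle| apply Rmax_l]. }
  eapply Rle_trans; [| apply Rmax_r].
  set (w' := (w0 + Q u) / 2).
  set (S := fun v => v = 0 \/ (0 < v < 1 /\ Q v <= w')).
  destruct (completeness S) as [m Hm].
  { exists 1. intros v [->|[Hv _]]; lra. }
  { exists 0. left; auto. }
  assert (Ht' : TailProb Q w' (1 - m)).
  { unfold TailProb. replace (1 - (1 - m)) with m by ring. exact Hm. }
  destruct (Hb w' (1 - m) ltac:(unfold w'; lra) Ht') as [_ Hup].
  assert (Hmu : m <= u).
  { apply Hm. intros v [->|[Hv Hqv]]; [lra|].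
    apply Rnot_lt_le. intro L. assert (Q u <= Q v) by (apply HQ1; lra). unfold w' in Hqv. lra. }
  assert (Hw' : 0 < w') by (unfold w'; lra).
  assert (Hp : 0 < Rpower w' (tau - 1)) by apply Rpower_pos.
  rewrite Rpower_Ropp in Hup.
  assert (K1 : Rpower w' (tau - 1) <= CW / (1 - u)).
  { apply (Rmult_le_reg_r ((1 - u) / Rpower w' (tau - 1))).
    apply Rdiv_lt_0_compat; lra.
    replace (Rpower w' (tau - 1) * ((1 - u) / Rpower w' (tau - 1))) with (1 - u) by (field; lra).
    replace (CW / (1 - u) * ((1 - u) / Rpower w' (tau - 1))) with (CW * / Rpower w' (tau - 1)) by (field; lra).
    lra. }
  assert (K2 : w' <= Rpower (CW / (1 - u)) g).
  { replace w' with (Rpower (Rpower w' (tau - 1)) g).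
    - apply Rle_Rpower_l; [lra| split; auto].
    - rewrite Rpower_mult. replace ((tau - 1) * g) with 1 by (unfold g; field; lra).
      apply Rpower_1; auto. }
  unfold Rdiv in K2. rewrite <- Rpower_mult_distr in K2 by (try apply Rinv_0_lt_compat; lra).
  rewrite Rpower_inv_base in K2 by lra.
  unfold w' in K2. nra.
Qed.

Lemma exp_le' x y : x <= y -> exp x <= exp y.
Proof. intros H. destruct (Req_dec x y) as [->|]; [lra| left; apply exp_increasing; lra]. Qed.

Lemma ln_le' x y : 0 < x -> x <= y -> ln x <= ln y.
Proof. intros H H'. destruct (Req_dec x y) as [->|]; [lra| left; apply ln_increasing; lra]. Qed.

Lemma N_mono x y : 0 <= x -> x <= y -> x * mm x <= y * mm y.
Proof.
  intros. apply Rmult_le_compat; auto. apply mm_nonneg; auto. apply mm_le; auto.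
Qed.

Lemma N_le_rp x r : 0 < x -> 2 <= r <= 4 -> x * mm x <= Rpower x r.
Proof.
  intros Hx Hr.
  destruct (Rle_lt_dec x 1).
  - apply Rle_trans with (Rpower x 4).
    + replace 4 with (INR 4) by (simpl; ring). rewrite Rpower_pow by auto.
      assert (mm x <= x ^ 3) by (unfold mm; apply Rmin_r).
      apply Rle_trans with (x * x ^ 3). apply Rmult_le_compat_l; lra. right; simpl; ring.
    + unfold Rpower. apply exp_le'. assert (ln x <= 0) by (rewrite <- ln_1; apply ln_le'; lra).
      nra.
  - apply Rle_trans with (Rpower x 2).
    + replace 2 with (INR 2) by (simpl; ring). rewrite Rpower_pow by auto.
      assert (mm x <= x) by (unfold mm; apply Rmin_l).
      apply Rle_trans with (x * x). apply Rmult_le_compat_l; lra. right; simpl; ring.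
    + unfold Rpower. apply exp_le'. assert (0 <= ln x) by (rewrite <- ln_1; apply ln_le'; lra).
      nra.
Qed.

Lemma pointwise_tail a z w0 A0 g q r : 0 < a -> 0 < z -> 0 < w0 -> 0 < A0 -> 0 <= q -> 2 <= r <= 4 -> forall u, u < 1 ->
  q <= Rmax w0 (A0 * Rpower (1 - u) (- g)) ->
  a * q * mm (a * q * z) <= (Rpower (a * w0 * z) r + hfun (a * z * A0) g u) / z.
Proof.
  intros Ha Hz Hw0 HA0 Hq Hr u Hu Hb.
  assert (E : a * q * mm (a * q * z) = (a * q * z) * mm (a * q * z) / z) by (field; lra).
  rewrite E. unfold Rdiv. apply Rmult_le_compat_r; [left; apply Rinv_0_lt_compat; auto|].
  pose proof (Rpower_pos (1 - u) (- g)).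
  assert (H1 : a * w0 * z * mm (a * w0 * z) <= Rpower (a * w0 * z) r).
  { apply N_le_rp; auto. apply Rmult_lt_0_compat; [apply Rmult_lt_0_compat|]; auto. }
  assert (H2 : 0 <= a * w0 * z * mm (a * w0 * z)).
  { apply Rmult_le_pos. apply Rmult_le_pos; [apply Rmult_le_pos|]; lra. apply mm_nonneg.
    apply Rmult_le_pos; [apply Rmult_le_pos|]; lra. }
  assert (H3 : 0 <= hfun (a * z * A0) g u).
  { unfold hfun. apply Rmult_le_pos. apply Rmult_le_pos; [apply Rmult_le_pos; [apply Rmult_le_pos|]|]; lra.
    apply mm_nonneg. apply Rmult_le_pos; [apply Rmult_le_pos; [apply Rmult_le_pos|]|]; lra. }
  assert (Haqz : 0 <= a * q * z) by (apply Rmult_le_pos; [apply Rmult_le_pos|]; lra).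
  unfold Rmax in Hb. destruct (Rle_dec w0 (A0 * Rpower (1 - u) (- g))).
  - assert (a * q * z * mm (a * q * z) <= hfun (a * z * A0) g u).
    { unfold hfun. replace (a * z * A0 * Rpower (1 - u) (- g)) with (a * (A0 * Rpower (1 - u) (- g)) * z) by ring.
      apply N_mono; auto. apply Rmult_le_compat_r; [lra|]. apply Rmult_le_compat_l; lra. }
    lra.
  - assert (a * q * z * mm (a * q * z) <= a * w0 * z * mm (a * w0 * z)).
    { apply N_mono; auto. apply Rmult_le_compat_r; [lra|]. apply Rmult_le_compat_l; lra. }
    lra.
Qed.

Lemma HM_tail Q (HQ : is_quantile Q) a z w0 A0 g r Kint :
  0 < a -> 0 < z -> 0 < w0 -> 0 < A0 -> 0 <= g -> 2 <= r <= 4 ->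
  (forall u, 0 < u < 1 -> Q u <= Rmax w0 (A0 * Rpower (1 - u) (- g))) ->
  (forall c d (pr : Riemann_integrable (hfun (a * z * A0) g) c d), 0 < c -> c <= d -> d < 1 -> RiemannInt pr <= Kint) ->
  forall c d (pr : Riemann_integrable (fun u => (fun w => a * w * mm (a * w * z)) (Q u)) c d),
    0 < c -> c < d -> d < 1 -> RiemannInt pr <= (Rpower (a * w0 * z) r + Kint) / z.
Proof.
  intros Ha Hz Hw0 HA0 Hg Hr HT HK c d pr Hc Hcd Hd.
  assert (HQ' := HQ); unfold is_quantile in HQ'; destruct HQ' as [HQ1 HQ2].
  assert (Hs0 : 0 <= a * z * A0) by (apply Rmult_le_pos; [apply Rmult_le_pos|]; lra).
  assert (Hcd' : c <= d) by lra.
  pose proof (hfun_int (a * z * A0) g c d Hs0 Hg Hcd' Hd) as q.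
  destruct (int_comb _ _ c d (/ z) (RiemannInt_P14 c d (Rpower (a * w0 * z) r / z)) q) as [j J].
  apply Rle_trans with (RiemannInt j).
  - apply int_mono; [lra|]. intros x Hx. unfold fct_cte. cbv beta.
    assert (Qx0 : 0 <= Q x) by (apply HQ2; lra).
    assert (Hx1 : x < 1) by lra.
    assert (Hbx := HT x ltac:(lra)).
    eapply Rle_trans. apply (pointwise_tail a z w0 A0 g (Q x) r Ha Hz Hw0 HA0 Qx0 Hr x Hx1 Hbx).
    right; field; lra.
  - rewrite J, RiemannInt_P15.
    pose proof (HK c d q Hc ltac:(lra) Hd).
    pose proof (Rpower_pos (a * w0 * z) r).
    assert (0 < / z) by (apply Rinv_0_lt_compat; auto).
    assert (Rpower (a * w0 * z) r / z * (d - c) <= Rpower (a * w0 * z) r / z).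
    { replace (Rpower (a * w0 * z) r / z) with (Rpower (a * w0 * z) r / z * 1) at 2 by ring.
      apply Rmult_le_compat_l; [| lra]. unfold Rdiv; apply Rmult_le_pos; lra. }
    assert (/ z * RiemannInt q <= / z * Kint) by (apply Rmult_le_compat_l; lra).
    unfold Rdiv. rewrite Rmult_plus_distr_r. unfold Rdiv in H1. nra.
Qed.

Lemma alpha_pos EW EW2 beta : 0 < EW -> 0 < EW2 ->
  arcsinh (1 / (EW2 / EW)) <= beta -> 0 < alpha EW beta.
Proof.
  intros H1 H2 Hb.
  destruct (betac_facts EW EW2 H1 H2) as (Hnu & Hbc & Hs).
  assert (0 < sinh beta).
  { apply Rlt_le_trans with (sinh (arcsinh (1 / (EW2 / EW)))).
    rewrite Hs. apply Rdiv_lt_0_compat; lra. apply sinh_le; auto. }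
  unfold alpha. apply sqrt_lt_R0. apply Rdiv_lt_0_compat; auto.
Qed.

Lemma rp_split_z x z p : 0 < x -> 0 < z -> Rpower (x * z) p / z = Rpower x p * Rpower z (p - 1).
Proof.
  intros Hx Hz. rewrite <- Rpower_mult_distr by auto.
  replace (Rpower z (p - 1)) with (Rpower z p / z). field; lra.
  replace p with ((p - 1) + 1) at 1 by ring. rewrite Rpower_plus, Rpower_1 by auto. field; lra.
Qed.

Lemma case2 (Q : R -> R) (HQ : is_quantile Q)
  (EW EW2 : R)
  (HEW : IsExp Q (fun w => w) EW) (HEW2 : IsExp Q (fun w => w ^ 2) EW2)
  (HEWpos : 0 < EW) :
  let nu := EW2 / EW in
  let betac := arcsinh (1 / nu) in
  (forall tau, 3 < tau < 5 -> PowerTail Q tau ->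
     Conclusion Q EW nu betac (fun c1 z => c1 * Rpower z (tau - 2))).
Proof.
  intros nu betac tau Ht HPT.
  destruct (get_setup Q HQ EW EW2 HEW HEW2 HEWpos) as (_ & HEW2pos & _).
  destruct (tail_Q Q tau HQ HPT ltac:(lra)) as (w0 & A0 & Hw0 & HA0 & HT).
  set (g := 1 / (tau - 1)) in HT.
  assert (Hg : 1/4 < g < 1/2).
  { unfold g. split.
    - apply (Rmult_lt_reg_r (4 * (tau - 1))); [lra|]. field_simplify; lra.
    - apply (Rmult_lt_reg_r (2 * (tau - 1))); [lra|]. field_simplify; lra. }
  assert (Hig : 1 / g = tau - 1) by (unfold g; field; lra).
  set (C := 1 / (1 - 2 * g) + 1 / (4 * g - 1)).
  assert (HC : 0 < C).
  { unfold C. assert (0 < 1 / (1 - 2 * g)) by (apply Rdiv_lt_0_compat; lra).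
    assert (0 < 1 / (4 * g - 1)) by (apply Rdiv_lt_0_compat; lra). lra. }
  set (amax := alpha EW (betac + 1)).
  assert (Ham : 0 < amax).
  { apply (alpha_pos EW EW2); auto. destruct (betac_facts EW EW2 HEWpos HEW2pos) as (_ & Hbc & _).
    fold nu betac in Hbc |- *. unfold betac, nu in *. lra. }
  set (K := Rpower (amax * w0) (tau - 1) + Rpower (amax * A0) (tau - 1) * C).
  assert (HK : 0 < K).
  { unfold K. pose proof (Rpower_pos (amax * w0) (tau - 1)). pose proof (Rpower_pos (amax * A0) (tau - 1)).
    nra. }
  apply (assemble Q HQ EW EW2 HEW HEW2 HEWpos HEW2pos _ 1 (8 * K + 1)); [lra| lra|].
  intros beta B z Hb HB [Hz HZ].
  set (a := alpha EW beta).
  assert (Ha : 0 < a) by (apply (alpha_pos EW EW2); auto; apply Hb).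
  assert (Haa : a <= amax) by (apply alpha_le; auto; unfold betac, nu in *; simpl in Hb; lra).
  set (s := a * z * A0).
  assert (Hs : 0 < s) by (unfold s; apply Rmult_lt_0_compat; [apply Rmult_lt_0_compat|]; auto).
  exists ((Rpower (a * w0 * z) (tau - 1) + Rpower s (1 / g) * C) / z). split.
  - assert (E : (Rpower (a * w0 * z) (tau - 1) + Rpower s (1 / g) * C) / z
       = (Rpower (a * w0) (tau - 1) + Rpower (a * A0) (tau - 1) * C) * Rpower z (tau - 2)).
    { rewrite Hig. unfold s.
      replace (a * z * A0) with ((a * A0) * z) by ring.
      replace ((Rpower (a * w0 * z) (tau - 1) + Rpower (a * A0 * z) (tau - 1) * C) / z) with
        (Rpower (a * w0 * z) (tau - 1) / z + Rpower (a * A0 * z) (tau - 1) / z * C) by (field; lra).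
      rewrite !rp_split_z by (try apply Rmult_lt_0_compat; auto).
      replace (tau - 1 - 1) with (tau - 2) by ring. ring. }
    rewrite E.
    assert (Rpower (a * w0) (tau - 1) <= Rpower (amax * w0) (tau - 1)).
    { apply Rle_Rpower_l; [lra|]. split. apply Rmult_lt_0_compat; auto. apply Rmult_le_compat_r; lra. }
    assert (Rpower (a * A0) (tau - 1) <= Rpower (amax * A0) (tau - 1)).
    { apply Rle_Rpower_l; [lra|]. split. apply Rmult_lt_0_compat; auto. apply Rmult_le_compat_r; lra. }
    pose proof (Rpower_pos z (tau - 2)).
    pose proof (Rpower_pos (a * w0) (tau - 1)). pose proof (Rpower_pos (a * A0) (tau - 1)).
    assert (Rpower (a * w0) (tau - 1) + Rpower (a * A0) (tau - 1) * C <= K) by (unfold K; nra).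
    nra.
  - intros c d pr Hc Hcd Hd.
    apply (HM_tail Q HQ a z w0 A0 g (tau - 1) (Rpower s (1 / g) * C)); auto; try lra.
    intros c' d' pr' H1 H2 H3. fold s in pr'. apply bound_tau; auto.
Qed.

Lemma F_mono a z B : 0 <= a -> 0 <= B -> 0 < z ->
  forall x y, 0 <= x -> x <= y -> (fun w => tanh (a * w * z + B) * (a * w)) x <= (fun w => tanh (a * w * z + B) * (a * w)) y.
Proof.
  intros Ha HB Hz x y Hx Hxy; simpl. apply Rmult_le_compat.
  - apply tanh_nonneg. assert (0 <= a * x * z) by (apply Rmult_le_pos; [apply Rmult_le_pos|]; lra). lra.
  - apply Rmult_le_pos; lra.
  - apply tanh_le. assert (a * x * z <= a * y * z) by (apply Rmult_le_compat_r; [lra|]; apply Rmult_le_compat_l; lra). lra.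
  - apply Rmult_le_compat_l; lra.
Qed.

Lemma z_upper Q (HQ : is_quantile Q) EW (HEW : IsExp Q (fun w => w) EW) a B z :
  0 <= a -> 0 <= B -> 0 < z -> IsExp Q (fun w => tanh (a * w * z + B) * (a * w)) z -> z <= a * EW.
Proof.
  intros Ha HB Hz HZ. apply (IsExp_least Q _ z HZ). intros c d pr Hc Hcd Hd.
  apply (int_scale_bound Q HQ (fun w => w) EW a (fun w => tanh (a * w * z + B) * (a * w))); auto.
  intros w0 Hw. pose proof (tanh_le1 (a * w0 * z + B)).
  assert (0 <= a * w0) by (apply Rmult_le_pos; lra). nra.
Qed.

Lemma core_upper (Q : R -> R) (HQ : is_quantile Q) (EW EW2 : R)
  (HEW : IsExp Q (fun w => w) EW) (HEW2 : IsExp Q (fun w => w ^ 2) EW2)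
  (a B z z0 u1 : R) (Ha : 0 <= a) (HB : 0 <= B) (Hz0 : 0 < z0) (Hzz : z0 <= z)
  (Hu1 : 0 < u1 < 1)
  (HZ : IsExp Q (fun w => tanh (a * w * z + B) * (a * w)) z) :
  z <= a * a * EW2 * z + a * B * EW - ((1 - u1) / 2) * (a * Q u1 * phi (a * Q u1 * z0)).
Proof.
  assert (HQ' := HQ); unfold is_quantile in HQ'; destruct HQ' as [HQ1 HQ2].
  assert (Hz : 0 < z) by lra.
  set (u2 := (u1 + 1) / 2).
  assert (Hint : forall g, (forall x y, 0 <= x -> x <= y -> g x <= g y) ->
     forall c d, 0 < c -> c <= d -> d < 1 -> Riemann_integrable (fun u => g (Q u)) c d).
  { intros g Hg. apply comp_integrable; auto. }
  assert (M1' : forall x y, 0 <= x -> x <= y -> (fun w : R => w) x <= (fun w : R => w) y) by (simpl; auto).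
  assert (M2' : forall x y, 0 <= x -> x <= y -> (fun w : R => w ^ 2) x <= (fun w : R => w ^ 2) y)
    by (intros; cbv beta; apply pow_incr; auto).
  assert (MG : forall x y, 0 <= x -> x <= y -> (fun w => a * w * phi (a * w * z0)) x <= (fun w => a * w * phi (a * w * z0)) y).
  { intros x y Hx Hxy; cbv beta. apply Rmult_le_compat.
    - apply Rmult_le_pos; lra.
    - apply phi_nonneg. apply Rmult_le_pos; [apply Rmult_le_pos|]; lra.
    - apply Rmult_le_compat_l; lra.
    - apply phi_le. apply Rmult_le_compat_r; [lra|]. apply Rmult_le_compat_l; lra. }
  pose proof (F_mono a z B Ha HB Hz) as MF.
  apply (IsExp_least Q _ z HZ). intros c d pr Hc Hcd Hd.
  set (c' := Rmin c u1). set (d' := Rmax d u2).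
  assert (Hc' : 0 < c') by (unfold c'; apply Rmin_glb_lt; lra).
  assert (Hd' : d' < 1) by (unfold d'; apply Rmax_lub_lt; unfold u2; lra).
  assert (c' <= c) by apply Rmin_l. assert (c' <= u1) by apply Rmin_r.
  assert (d <= d') by apply RmaxLess1. assert (u2 <= d') by apply RmaxLess2.
  assert (Q0 : forall x, c' < x < d' -> 0 <= Q x) by (intros; apply HQ2; lra).
  pose proof (Hint _ M1' c' d' Hc' ltac:(lra) Hd') as q1.
  pose proof (Hint _ M2' c' d' Hc' ltac:(lra) Hd') as q2.
  pose proof (Hint _ MG c' d' Hc' ltac:(lra) Hd') as qG.
  pose proof (Hint _ MF c' d' Hc' ltac:(lra) Hd') as qF.
  pose proof (Hint _ MG u1 u2 ltac:(lra) ltac:(unfold u2; lra) ltac:(unfold u2; lra)) as qG'.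
  assert (L1 : RiemannInt pr <= RiemannInt qF).
  { apply (int_enlarge _ c' c d d'); try lra.
    - intros; apply (Hint _ MF); lra.
    - intros x Hx. cbv beta. pose proof (Q0 x Hx).
      apply Rmult_le_pos. apply tanh_nonneg. assert (0 <= a * Q x * z) by (apply Rmult_le_pos; [apply Rmult_le_pos|]; lra). lra.
      apply Rmult_le_pos; lra. }
  assert (L2 : RiemannInt qG' <= RiemannInt qG).
  { apply (int_enlarge _ c' u1 u2 d'); try lra; try (unfold u2; lra).
    - intros; apply (Hint _ MG); lra.
    - intros x Hx. cbv beta. pose proof (Q0 x Hx). apply Rmult_le_pos. apply Rmult_le_pos; lra.
      apply phi_nonneg. apply Rmult_le_pos; [apply Rmult_le_pos|]; lra. }
  assert (L3 : (u2 - u1) * (a * Q u1 * phi (a * Q u1 * z0)) <= RiemannInt qG').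
  { rewrite Rmult_comm. rewrite <- (RiemannInt_P15 (RiemannInt_P14 u1 u2 (a * Q u1 * phi (a * Q u1 * z0)))).
    apply RiemannInt_P19; [unfold u2; lra|]. intros x Hx. unfold fct_cte.
    apply (MG (Q u1) (Q x)). apply HQ2; lra. apply HQ1; unfold u2 in *; lra. }
  assert (I1 : RiemannInt q1 <= EW) by (apply (IsExp_ub Q _ EW HEW); lra).
  assert (I2 : RiemannInt q2 <= EW2) by (apply (IsExp_ub Q _ EW2 HEW2); lra).
  destruct (int_comb _ _ c' d' (a * a * z) (RiemannInt_P14 c' d' 0) q2) as [j1 J1].
  destruct (int_comb _ _ c' d' (a * B) j1 q1) as [j2 J2].
  destruct (int_comb _ _ c' d' 1 qF qG) as [j3 J3].
  assert (L : RiemannInt j3 <= RiemannInt j2).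
  { apply int_mono; [lra|]. intros x Hx. unfold fct_cte. cbv beta.
    pose proof (Q0 x Hx) as Hq.
    set (y := a * Q x * z + B).
    assert (Hy : a * Q x * z0 <= y).
    { unfold y. assert (a * Q x * z0 <= a * Q x * z) by (apply Rmult_le_compat_l; [apply Rmult_le_pos|]; lra). lra. }
    assert (Hy0 : 0 <= a * Q x * z0) by (apply Rmult_le_pos; [apply Rmult_le_pos|]; lra).
    pose proof (phi_le _ _ Hy). unfold phi at 2 in H3.
    assert (0 <= a * Q x) by (apply Rmult_le_pos; lra).
    assert (a * Q x * phi (a * Q x * z0) <= a * Q x * (y - tanh y)) by (apply Rmult_le_compat_l; lra).
    unfold y in *. nra. }
  rewrite J3, J2, J1, RiemannInt_P15 in L.
  assert (0 <= a * a * z) by (apply Rmult_le_pos; [apply Rmult_le_pos|]; lra).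
  assert (0 <= a * B) by (apply Rmult_le_pos; lra).
  assert (a * a * z * RiemannInt q2 <= a * a * z * EW2) by (apply Rmult_le_compat_l; lra).
  assert (a * B * RiemannInt q1 <= a * B * EW) by (apply Rmult_le_compat_l; lra).
  replace ((1 - u1) / 2) with (u2 - u1) by (unfold u2; field).
  nra.
Qed.

Lemma sinh_lip x y : 0 <= x -> x <= y -> sinh y - sinh x <= exp y * (y - x).
Proof.
  intros Hx Hxy. destruct (Req_dec x y) as [->|Hne]. { rewrite !Rminus_diag; rewrite Rmult_0_r; lra. }
  destruct (MVT_cor2 sinh cosh x y ltac:(lra) (fun c _ => derivable_pt_lim_sinh c)) as [c [E Hc]].
  rewrite E. apply Rmult_le_compat_r; [lra|].
  unfold cosh. assert (exp (- c) <= exp c) by (apply exp_le'; lra).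
  assert (exp c <= exp y) by (apply exp_le'; lra). lra.
Qed.

Lemma G_mono a b q z0 : 0 <= a -> a <= b -> 0 <= q -> 0 <= z0 ->
  a * q * phi (a * q * z0) <= b * q * phi (b * q * z0).
Proof.
  intros. apply Rmult_le_compat.
  - apply Rmult_le_pos; lra.
  - apply phi_nonneg. apply Rmult_le_pos; [apply Rmult_le_pos|]; lra.
  - apply Rmult_le_compat_r; lra.
  - apply phi_le. apply Rmult_le_compat_r; [lra|]. apply Rmult_le_compat_r; lra.
Qed.

Lemma case3 (Q : R -> R) (HQ : is_quantile Q)
  (EW EW2 : R)
  (HEW : IsExp Q (fun w => w) EW) (HEW2 : IsExp Q (fun w => w ^ 2) EW2)
  (HEWpos : 0 < EW) :
  let nu := EW2 / EW in
  let betac := arcsinh (1 / nu) in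
  (PowerTail Q 5 ->
     Conclusion Q EW nu betac (fun c1 z => c1 * z ^ 3 * ln (1 / z))).
Proof.
  intros nu betac HPT.
  destruct (get_setup Q HQ EW EW2 HEW HEW2 HEWpos) as (_ & HEW2pos & u1 & Hu1 & Hq1).
  destruct (betac_facts EW EW2 HEWpos HEW2pos) as (Hnu & Hbc & Hsbc). fold nu betac in Hnu, Hbc, Hsbc.
  destruct (tail_Q Q 5 HQ HPT ltac:(lra)) as (w0 & A0 & Hw0 & HA0 & HT).
  replace (1 / (5 - 1)) with (1/4) in HT by field.
  set (ac := alpha EW betac).
  assert (Hac : 0 < ac) by (apply (alpha_pos EW EW2); auto; unfold betac, nu; lra).
  set (amax := alpha EW (betac + 1)).
  assert (Hacm : ac <= amax) by (apply alpha_le; auto; lra).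
  set (A1 := Rmax A0 (1 / ac)).
  assert (HA1 : 0 < A1) by (unfold A1; eapply Rlt_le_trans; [apply HA0| apply Rmax_l]).
  assert (HT1 : forall u, 0 < u < 1 -> Q u <= Rmax w0 (A1 * Rpower (1 - u) (- (1/4)))).
  { intros u Hu. eapply Rle_trans; [apply HT; auto|]. unfold Rmax at 1.
    destruct (Rle_dec w0 (A0 * Rpower (1 - u) (- (1 / 4)))).
    - eapply Rle_trans; [| apply Rmax_r]. apply Rmult_le_compat_r. left; apply Rpower_pos. apply Rmax_l.
    - apply Rmax_l. }
  set (q1 := Q u1).
  set (D0 := (1 - u1) / 2 * (ac * q1 * phi (ac * q1 * (1/2)))).
  assert (HD0 : 0 < D0).
  { unfold D0. apply Rmult_lt_0_compat. lra.
    apply Rmult_lt_0_compat. apply Rmult_lt_0_compat; auto.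
    apply phi_pos. apply Rmult_lt_0_compat; [apply Rmult_lt_0_compat|]; auto; lra. }
  set (Lc := amax * EW * nu * exp (betac + 1) + amax * EW).
  assert (HLc : 0 < Lc).
  { unfold Lc. pose proof (exp_pos (betac + 1)).
    assert (0 < amax * EW) by (apply Rmult_lt_0_compat; lra).
    assert (0 < amax * EW * nu * exp (betac + 1)) by (apply Rmult_lt_0_compat; [apply Rmult_lt_0_compat|]; auto).
    lra. }
  set (eps := Rmin 1 (D0 / (2 * Lc))).
  assert (Heps : 0 < eps) by (unfold eps; apply Rmin_glb_lt; [lra| apply Rdiv_lt_0_compat; lra]).
  assert (Heps1 : eps <= 1) by apply Rmin_l.
  assert (Heps2 : eps * Lc <= D0 / 2).
  { assert (eps <= D0 / (2 * Lc)) by apply Rmin_r.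
    apply Rle_trans with (D0 / (2 * Lc) * Lc). apply Rmult_le_compat_r; lra.
    right; field; lra. }
  set (c1 := 8 * (2 * (amax * w0) ^ 4 + 8 * (amax * A1) ^ 4) + 1).
  assert (Hc1 : 0 < c1).
  { unfold c1. assert (0 <= (amax * w0) ^ 4) by (apply pow_le; apply Rmult_le_pos; lra).
    assert (0 <= (amax * A1) ^ 4) by (apply pow_le; apply Rmult_le_pos; lra). lra. }
  apply (assemble Q HQ EW EW2 HEW HEW2 HEWpos HEW2pos _ eps c1); [lra| lra|].
  intros beta B z Hb HB [Hz HZ].
  fold nu betac in Hb.
  set (a := alpha EW beta).
  assert (Ha : 0 < a) by (apply (alpha_pos EW EW2); auto; apply Hb).
  assert (Haa : a <= amax) by (apply alpha_le; auto; lra).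
  assert (Haca : ac <= a) by (apply alpha_le; auto; lra).
  assert (Hsb : sinh betac <= sinh beta) by (apply sinh_le; lra).
  assert (Hinu : 0 < 1 / nu) by (apply Rdiv_lt_0_compat; lra).
  assert (Hasq : a * a = sinh beta / EW) by (apply alpha_sq; auto; lra).
  assert (Hzs : z <= 1/2).
  { apply Rnot_lt_le. intro Hzl.
    pose proof (core_upper Q HQ EW EW2 HEW HEW2 a B z (1/2) u1 ltac:(lra) ltac:(lra) ltac:(lra) ltac:(lra) Hu1 HZ) as K.
    assert (KD : D0 <= (1 - u1) / 2 * (a * Q u1 * phi (a * Q u1 * (1 / 2)))).
    { unfold D0, q1. apply Rmult_le_compat_l; [lra|]. apply G_mono; lra. }
    assert (KE : a * a * EW2 * z = sinh beta * nu * z) by (rewrite Hasq; unfold nu; field; lra).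
    assert (Kz : z <= a * EW) by (apply (z_upper Q HQ EW HEW a B z); auto; lra).
    assert (Ksl : sinh beta - sinh betac <= exp beta * (beta - betac)) by (apply sinh_lip; lra).
    assert (Kex : exp beta <= exp (betac + 1)) by (apply exp_le'; lra).
    assert (Ks : sinh beta * nu - 1 <= exp (betac + 1) * eps * nu).
    { rewrite Hsbc in Ksl. replace (sinh beta * nu - 1) with ((sinh beta - 1 / nu) * nu) by (field; lra).
      apply Rmult_le_compat_r; [lra|].
      apply Rle_trans with (exp beta * (beta - betac)); auto.
      pose proof (exp_pos beta). apply Rmult_le_compat; lra. }
    assert (Ks0 : 0 <= sinh beta * nu - 1).
    { rewrite Hsbc in Hsb. apply (Rmult_le_compat_r nu) in Hsb; [|lra].
      replace (1 / nu * nu) with 1 in Hsb by (field; lra). lra. }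
    assert (K1 : z * (sinh beta * nu - 1) <= amax * EW * (exp (betac + 1) * eps * nu)).
    { apply Rmult_le_compat; try lra. apply Rle_trans with (a * EW); auto. apply Rmult_le_compat_r; lra. }
    assert (K2 : a * B * EW <= amax * eps * EW).
    { apply Rmult_le_compat_r; [lra|]. apply Rmult_le_compat; lra. }
    assert (K3 : amax * EW * (exp (betac + 1) * eps * nu) + amax * eps * EW = eps * Lc) by (unfold Lc; ring).
    lra. }
  assert (Hz2 : 2 <= 1 / z).
  { apply (Rmult_le_reg_r z); auto. replace (1 / z * z) with 1 by (field; lra). lra. }
  set (L := ln (1 / z)).
  assert (HL : 1 / 2 <= L).
  { unfold L. pose proof ln_lt_2. assert (ln 2 <= ln (1 / z)) by (apply ln_le'; lra). lra. }
  set (s := a * z * A1).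
  assert (Hs : 0 < s) by (unfold s; apply Rmult_lt_0_compat; [apply Rmult_lt_0_compat|]; auto).
  set (lam := Rpower s 4).
  exists ((Rpower (a * w0 * z) 4 + lam * (2 + Rmax 0 (- ln lam))) / z). split.
  - assert (E4 : forall x, 0 < x -> Rpower x 4 = x ^ 4).
    { intros x Hx. replace 4 with (INR 4) by (simpl; ring). apply Rpower_pow; auto. }
    assert (HaA1 : 1 <= a * A1).
    { apply Rle_trans with (ac * (1 / ac)). right; field; lra.
      apply Rmult_le_compat; try lra. left; apply Rdiv_lt_0_compat; lra. apply Rmax_r. }
    assert (Hlnl : - ln lam <= 4 * L).
    { unfold lam, L. rewrite ln_Rpower. unfold s.
      rewrite ln_mult by (try apply Rmult_lt_0_compat; auto; lra).
      replace (a * z) with (z * a) by ring.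
      rewrite ln_mult by lra.
      unfold Rdiv. rewrite Rmult_1_l. rewrite ln_Rinv by lra.
      assert (Hln : 0 <= ln (a * A1)) by (rewrite <- ln_1; apply ln_le'; lra).
      rewrite ln_mult in Hln by lra. lra. }
    assert (Hmx : Rmax 0 (- ln lam) <= 4 * L) by (apply Rmax_lub; lra).
    set (R1 := Rmax 0 (- ln lam)) in *.
    rewrite E4 by (apply Rmult_lt_0_compat; [apply Rmult_lt_0_compat|]; auto; lra).
    assert (Elam : lam = (a * A1) ^ 4 * z ^ 3 * z) by (unfold lam, s; rewrite E4 by auto; ring).
    rewrite Elam.
    assert (Ew : (a * w0 * z) ^ 4 = (a * w0) ^ 4 * z ^ 3 * z) by ring.
    rewrite Ew.
    replace (((a * w0) ^ 4 * z ^ 3 * z + (a * A1) ^ 4 * z ^ 3 * z * (2 + R1)) / z)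
      with (z ^ 3 * ((a * w0) ^ 4 + (a * A1) ^ 4 * (2 + R1))) by (field; lra).
    assert (P1 : (a * w0) ^ 4 <= (amax * w0) ^ 4) by (apply pow_incr; split; [apply Rmult_le_pos|apply Rmult_le_compat_r]; lra).
    assert (P2 : (a * A1) ^ 4 <= (amax * A1) ^ 4) by (apply pow_incr; split; [apply Rmult_le_pos|apply Rmult_le_compat_r]; lra).
    assert (P0 : 0 <= (a * w0) ^ 4) by (apply pow_le; apply Rmult_le_pos; lra).
    assert (P0' : 0 <= (a * A1) ^ 4) by (apply pow_le; apply Rmult_le_pos; lra).
    assert (Hz3 : 0 < z ^ 3) by (apply pow_lt; auto).
    assert (B1 : (a * w0) ^ 4 + (a * A1) ^ 4 * (2 + R1) <= L * (2 * (amax * w0) ^ 4 + 8 * (amax * A1) ^ 4)).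
    { assert (0 <= R1) by apply Rmax_l.
      assert ((a * A1) ^ 4 * (2 + R1) <= (a * A1) ^ 4 * (8 * L)) by (apply Rmult_le_compat_l; lra).
      assert ((a * w0) ^ 4 <= (a * w0) ^ 4 * (2 * L)).
      { replace ((a * w0) ^ 4) with ((a * w0) ^ 4 * 1) at 1 by ring. apply Rmult_le_compat_l; lra. }
      nra. }
    assert (0 <= L * (2 * (amax * w0) ^ 4 + 8 * (amax * A1) ^ 4)) by nra.
    apply Rle_trans with (8 * (z ^ 3 * (L * (2 * (amax * w0) ^ 4 + 8 * (amax * A1) ^ 4)))).
    { apply Rmult_le_compat_l; [lra|]. apply Rmult_le_compat_l; lra. }
    unfold c1. fold L. nra.
  - intros c d pr Hc Hcd Hd.
    apply (HM_tail Q HQ a z w0 A1 (1/4) 4 (lam * (2 + Rmax 0 (- ln lam)))); auto; try lra.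
    intros c' d' pr' H1 H2 H3. fold s in pr'. apply bound_5; auto.
Qed.

Theorem mainTheorem8 (Q : R -> R) (HQ : is_quantile Q)
  (EW EW2 : R)
  (HEW : IsExp Q (fun w => w) EW) (HEW2 : IsExp Q (fun w => w ^ 2) EW2)
  (HEWpos : 0 < EW) :
  let nu := EW2 / EW in
  let betac := arcsinh (1 / nu) in
  ((exists m4, IsExp Q (fun w => w ^ 4) m4) ->
     Conclusion Q EW nu betac (fun c1 z => c1 * Rpower z 3)) /\
  (forall tau, 3 < tau < 5 -> PowerTail Q tau ->
     Conclusion Q EW nu betac (fun c1 z => c1 * Rpower z (tau - 2))) /\
  (PowerTail Q 5 ->
     Conclusion Q EW nu betac (fun c1 z => c1 * z ^ 3 * ln (1 / z))).
Proof.
  intros nu betac. split; [|split].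
  - apply (case1 Q HQ EW EW2 HEW HEW2 HEWpos).
  - apply (case2 Q HQ EW EW2 HEW HEW2 HEWpos).
  - apply (case3 Q HQ EW EW2 HEW HEW2 HEWpos).
Qed.
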